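(* Let $c>1$ be a non-integral real number, let $L=\lfloor c\rfloor+1$ and let $m$ be a positive integer. For any $L$-tuple $h=(h_0,h_1,\ldots,h_{L-1})$ of integers which are not all $0$ and any positive integer $N$, we have \[\sum_{n=N}^{2N-1}e\Bigl(\frac1m\sum_{\ell=0}^{L-1}h_\ell (n+\ell)^c\Bigr)\ll_{L,c,m}\|h\|_\infty\,N^{1-\frac{\|c\|}{2^{(c+1)}}},\] as soon as $\|h\|_\infty=o\bigl(N^{1-\{c\}}\bigr)$ (that is: for $N$ and $h$ ranging so that $\|h\|_\infty/N^{1-\{c\}}\to 0$, the bound holds with an implied constant depending only on $L,c,m$).
   Context: $e(u)=\exp(2\pi i u)$. For $h\in\mathbb R^L$, $\|h\|_\infty=\max_i|h_i|$. For real $x$, $\{x\}=x-\lfloor x\rfloor$ is the fractional part and $\|x\|=\min\{\{x\},1-\{x\}\}$ is the distance from $x$ to the nearest integer. The exponent $2^{(c+1)}$ is the real power $2^{c+1}$. *)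

(* Defs.v *)
From Stdlib Require Import Reals List.
From Coquelicot Require Import Coquelicot.
Import ListNotations.
Open Scope R_scope.

(* floor x (as an integer): Stdlib's Int_part x = up x - 1 = floor x *)
Definition rfloor (x : R) : Z := Int_part x.

Definition fracp (x : R) : R := x - IZR (rfloor x).

Definition dist_int (x : R) : R := Rmin (fracp x) (1 - fracp x).

Definition e (u : R) : C := (cos (2 * PI * u), sin (2 * PI * u)).

Definition rsum_lt (L : nat) (f : nat -> R) : R :=
  fold_right Rplus 0 (map f (seq 0 L)).

Definition csum_N_2N (N : nat) (f : nat -> C) : C :=
  fold_right Cplus (RtoC 0) (map f (seq N N)).

Definition hnorm (L : nat) (h : nat -> Z) : R :=
  fold_right Rmax 0 (map (fun l => Rabs (IZR (h l))) (seq 0 L)).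

Definition expsum (c : R) (m : nat) (L : nat) (h : nat -> Z) (N : nat) : C :=
  csum_N_2N N (fun n =>
    e (/ INR m * rsum_lt L (fun l => IZR (h l) * Rpower (INR (n + l)) c))).

(* Main.v *)
Require Import Defs.
From Stdlib Require Import Reals Lra Lia List Arith ZArith Classical.
From Coquelicot Require Import Coquelicot.
Import ListNotations.
Open Scope R_scope.

Fixpoint rsum (f : nat -> R) (n : nat) : R :=
  match n with O => 0 | S k => rsum f k + f k end.
Fixpoint csum (f : nat -> C) (n : nat) : C :=
  match n with O => RtoC 0 | S k => Cplus (csum f k) (f k) end.

Lemma rsum_ext f g n : (forall i, (i < n)%nat -> f i = g i) -> rsum f n = rsum g n.
Proof. induction n; simpl; intros H; auto. rewrite IHn by (intros; apply H; lia). rewrite H by lia. auto. Qed.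
Lemma csum_ext f g n : (forall i, (i < n)%nat -> f i = g i) -> csum f n = csum g n.
Proof. induction n; simpl; intros H; auto. rewrite IHn by (intros; apply H; lia). rewrite H by lia. auto. Qed.
Lemma rsum_le f g n : (forall i, (i < n)%nat -> f i <= g i) -> rsum f n <= rsum g n.
Proof. induction n; simpl; intros H; [lra|]. assert (f n <= g n) by (apply H; lia).
 assert (rsum f n <= rsum g n) by (apply IHn; intros; apply H; lia). lra. Qed.
Lemma Cmod_csum f n : Cmod (csum f n) <= rsum (fun i => Cmod (f i)) n.
Proof. induction n; simpl. rewrite Cmod_0; lra.
 eapply Rle_trans. apply Cmod_triangle. lra. Qed.
Lemma rsum_const x n : rsum (fun _ => x) n = INR n * x.
Proof. induction n; simpl rsum. simpl; lra. rewrite IHn, S_INR. lra. Qed.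
Lemma rsum_plus f g n : rsum (fun i => f i + g i) n = rsum f n + rsum g n.
Proof. induction n; simpl; lra. Qed.
Lemma rsum_scal a f n : rsum (fun i => a * f i) n = a * rsum f n.
Proof. induction n; simpl; [lra|]. rewrite IHn; lra. Qed.
Lemma rsum_nonneg f n : (forall i, (i < n)%nat -> 0 <= f i) -> 0 <= rsum f n.
Proof. intros H. replace 0 with (rsum (fun _ => 0) n). apply rsum_le; auto.
 rewrite rsum_const; lra. Qed.

Lemma e_add x y : e (x + y) = Cmult (e x) (e y).
Proof. unfold e, Cmult; simpl. f_equal.
 replace (2*PI*(x+y)) with (2*PI*x + 2*PI*y) by ring. apply cos_plus.
 replace (2*PI*(x+y)) with (2*PI*x + 2*PI*y) by ring. rewrite sin_plus. ring. Qed.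
Lemma Cmod_e x : Cmod (e x) = 1.
Proof. unfold Cmod, e; simpl.
 pose proof (sin2_cos2 (2*PI*x)). unfold Rsqr in H.
 replace (cos (2 * PI * x) * (cos (2 * PI * x) * 1) + sin (2 * PI * x) * (sin (2 * PI * x) * 1)) with 1 by lra.
 apply sqrt_1. Qed.
Lemma e_shift_nat x n : e (x + INR n) = e x.
Proof. unfold e. f_equal.
 - replace (2*PI*(x+INR n)) with (2*PI*x + 2*INR n*PI) by ring. apply cos_period.
 - replace (2*PI*(x+INR n)) with (2*PI*x + 2*INR n*PI) by ring. apply sin_period. Qed.

Definition cotp (g : R) := cos (PI*g) / sin (PI*g).
Definition cc (g : R) : C := (- / 2, - cotp g / 2).

Lemma sinp_pos g : 0 < g < 1 -> 0 < sin (PI*g).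
Proof. intros. apply sin_gt_0. pose proof PI_RGT_0; nra. pose proof PI_RGT_0; nra. Qed.

Lemma cc_prop g : 0 < g < 1 -> Cmult (Cminus (e g) (RtoC 1)) (cc g) = RtoC 1.
Proof. intros Hg. pose proof (sinp_pos g Hg) as Hs.
 unfold e, cc, cotp, Cmult, Cminus, Cplus, Copp, RtoC; simpl.
 replace (2*PI*g) with (2*(PI*g)) by ring. rewrite cos_2a_sin, sin_2a.
 pose proof (sin2_cos2 (PI*g)) as H2. unfold Rsqr in H2.
 f_equal; field_simplify; try lra; nra. Qed.

Lemma cotp_decr x y : 0 < x -> x <= y -> y < 1 -> cotp y <= cotp x.
Proof. intros. unfold cotp.
 assert (0 < sin (PI*x)) by (apply sinp_pos; lra).
 assert (0 < sin (PI*y)) by (apply sinp_pos; lra).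
 assert (0 <= sin (PI*y - PI*x)). { apply sin_ge_0; pose proof PI_RGT_0; nra. }
 rewrite sin_minus in H4.
 apply Rmult_le_reg_r with (sin (PI*x) * sin (PI*y)). nra.
 replace (cos (PI * y) / sin (PI * y) * (sin (PI * x) * sin (PI * y))) with (cos (PI*y) * sin (PI*x)) by (field; lra).
 replace (cos (PI * x) / sin (PI * x) * (sin (PI * x) * sin (PI * y))) with (cos (PI*x) * sin (PI*y)) by (field; lra).
 lra. Qed.

Lemma cotp_sym l : cotp (1 - l) = - cotp l.
Proof. unfold cotp. replace (PI*(1-l)) with (PI - PI*l) by ring.
 rewrite cos_minus, sin_minus, cos_PI, sin_PI. unfold Rdiv.
 replace (-1 * cos (PI*l) + 0 * sin (PI*l)) with (- cos (PI*l)) by ring.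
 replace (0 * cos (PI * l) - -1 * sin (PI * l)) with (sin (PI*l)) by ring. ring. Qed.

Lemma cotp_abs l g : 0 < l <= /2 -> l <= g <= 1 - l -> Rabs (cotp g) <= cotp l.
Proof. intros. pose proof (cotp_decr l g ltac:(lra) ltac:(lra) ltac:(lra)).
 pose proof (cotp_decr g (1-l) ltac:(lra) ltac:(lra) ltac:(lra)). rewrite cotp_sym in H2.
 apply Rabs_le; lra. Qed.

Lemma cotp_bound l : 0 < l <= /2 -> cotp l <= 1 / l.
Proof. intros. unfold cotp. pose proof PI2_3_2. pose proof PI_4.
 assert (Hs: PI*l - (PI*l)^3/6 <= sin (PI*l)).
 { pose proof (sin_bound (PI*l) 0 ltac:(nra) ltac:(nra)) as [H3 _].
   unfold sin_approx, sin_term in H3. simpl in H3. lra. }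
 assert (0 < sin (PI*l)) by (apply sinp_pos; lra).
 assert (PI*l/3 <= sin (PI*l)). { assert (PI*l <= 2) by nra. assert (0 <= PI*l) by nra.
   set (t := PI*l) in *. assert (0 <= t * ((2 - t) * (2 + t))) by (apply Rmult_le_pos; [lra| apply Rmult_le_pos; lra]).
   simpl in Hs. nra. }
 pose proof (COS_bound (PI*l)) as [_ Hc].
 apply Rle_trans with (1 / sin (PI*l)).
 - unfold Rdiv. apply Rmult_le_compat_r. left; apply Rinv_0_lt_compat; lra. lra.
 - unfold Rdiv. rewrite !Rmult_1_l. apply Rinv_le_contravar. lra. nra. Qed.

Lemma Cmod_le_abs (z : C) : Cmod z <= Rabs (fst z) + Rabs (snd z).
Proof. unfold Cmod. rewrite <- (sqrt_Rsqr (Rabs (fst z) + Rabs (snd z))).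
 apply sqrt_le_1_alt. unfold Rsqr.
 unfold Rabs; destruct (Rcase_abs (fst z)); destruct (Rcase_abs (snd z)); nra.
 pose proof (Rabs_pos (fst z)). pose proof (Rabs_pos (snd z)). lra. Qed.

Lemma abs_le_inv x b : Rabs x <= b -> - b <= x <= b.
Proof. unfold Rabs; destruct Rcase_abs; lra. Qed.

Lemma abel (u c : nat -> C) j :
  csum (fun i => Cmult (Cminus (u (S i)) (u i)) (c i)) (S j) =
  Cminus (Cminus (Cmult (u (S j)) (c j)) (Cmult (u O) (c O)))
    (csum (fun i => Cmult (u (S i)) (Cminus (c (S i)) (c i))) j).
Proof. induction j.
 - simpl. ring.
 - change (csum (fun i => Cmult (Cminus (u (S i)) (u i)) (c i)) (S (S j))) with
    (Cplus (csum (fun i => Cmult (Cminus (u (S i)) (u i)) (c i)) (S j))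
           (Cmult (Cminus (u (S (S j))) (u (S j))) (c (S j)))).
   rewrite IHj. simpl. ring. Qed.

Definition S_ (th : nat -> R) (a N : nat) : C := csum (fun i => e (th (a + i)%nat)) N.

Lemma telescope_incr (x : nat -> R) k : (forall i, (i < k)%nat -> x i <= x (S i)) ->
  rsum (fun i => Rabs (x (S i) - x i)) k = x k - x O.
Proof. induction k; simpl; intros H. lra. rewrite IHk by (intros; apply H; lia).
 rewrite Rabs_right. lra. assert (x k <= x (S k)) by (apply H; lia). lra. Qed.
Lemma telescope_decr (x : nat -> R) k : (forall i, (i < k)%nat -> x (S i) <= x i) ->
  rsum (fun i => Rabs (x (S i) - x i)) k = x O - x k.
Proof. induction k; simpl; intros H. lra. rewrite IHk by (intros; apply H; lia).
 rewrite Rabs_left1. lra. assert (x (S k) <= x k) by (apply H; lia). lra. Qed.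

Lemma KL (th : nat -> R) (a N : nat) (l : R) :
  0 < l <= /2 ->
  (forall i, (S i < N)%nat -> l <= th (a + S i)%nat - th (a + i)%nat <= 1 - l) ->
  ((forall i, (S (S i) < N)%nat ->
      th (a + S i)%nat - th (a + i)%nat <= th (a + S (S i))%nat - th (a + S i)%nat) \/
   (forall i, (S (S i) < N)%nat ->
      th (a + S (S i))%nat - th (a + S i)%nat <= th (a + S i)%nat - th (a + i)%nat)) ->
  Cmod (S_ th a N) <= 4 / l.
Proof.
 intros Hl Hg Hm.
 assert (H1l : 2 <= 1 / l). { apply Rmult_le_reg_r with l. lra. field_simplify; lra. }
 destruct N as [|[|k]].
 - unfold S_; simpl. rewrite Cmod_0. lra.
 - unfold S_; simpl. eapply Rle_trans. apply Cmod_triangle. rewrite Cmod_0, Cmod_e. lra.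
 - set (u := fun i => e (th (a + i)%nat)).
   set (g := fun i => th (a + S i)%nat - th (a + i)%nat).
   set (c := fun i => cc (g i)).
   assert (Hu : forall i, (i <= k)%nat -> u i = Cmult (Cminus (u (S i)) (u i)) (c i)).
   { intros i Hi. assert (u (S i) = Cmult (u i) (e (g i))).
     { unfold u, g. rewrite <- e_add. f_equal. ring. }
     rewrite H. unfold c. replace (Cminus (Cmult (u i) (e (g i))) (u i)) with
        (Cmult (u i) (Cminus (e (g i)) (RtoC 1))) by ring.
     rewrite <- Cmult_assoc, cc_prop. ring. unfold g. specialize (Hg i ltac:(lia)). lra. }
   assert (HS : S_ th a (S (S k)) = Cplus (csum (fun i => Cmult (Cminus (u (S i)) (u i)) (c i)) (S k)) (u (S k))).
   { unfold S_. change (csum (fun i => e (th (a + i)%nat)) (S (S k))) with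
       (Cplus (csum u (S k)) (u (S k))). f_equal. apply csum_ext. intros; apply Hu; lia. }
   rewrite HS, abel.
   assert (Hc : forall i, (i <= k)%nat -> Cmod (c i) <= /2 + cotp l / 2).
   { intros i Hi. unfold c, cc. eapply Rle_trans. apply Cmod_le_abs. simpl.
     rewrite Rabs_Ropp, Rabs_right by lra. unfold Rdiv. rewrite Rabs_mult, Rabs_Ropp.
     rewrite (Rabs_right (/2)) by lra. pose proof (cotp_abs l (g i) Hl (Hg i ltac:(lia))). lra. }
   assert (Hd : forall i, (i < k)%nat -> Cmod (Cmult (u (S i)) (Cminus (c (S i)) (c i))) <=
        Rabs (cotp (g (S i)) - cotp (g i)) / 2).
   { intros i Hi. rewrite Cmod_mult. unfold u; rewrite Cmod_e, Rmult_1_l.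
     unfold c, cc. eapply Rle_trans. apply Cmod_le_abs. simpl.
     replace (- / 2 + - - / 2) with 0 by ring. rewrite Rabs_R0.
     replace (- cotp (g (S i)) / 2 + - (- cotp (g i) / 2)) with ((cotp (g (S i)) - cotp (g i)) * (-/2)) by field.
     rewrite Rabs_mult, (Rabs_left (-/2)) by lra. lra. }
   assert (Ht : rsum (fun i => Rabs (cotp (g (S i)) - cotp (g i))) k <= 2 * cotp l).
   { pose proof (cotp_abs l (g O) Hl (Hg O ltac:(lia))).
     pose proof (cotp_abs l (g k) Hl (Hg k ltac:(lia))).
     destruct Hm as [Hm|Hm].
     - pose proof (telescope_decr (fun i => cotp (g i)) k) as T; cbv beta in T.
       rewrite T. apply abs_le_inv in H. apply abs_le_inv in H0. lra.
       intros i Hi. apply cotp_decr. specialize (Hg i ltac:(lia)); unfold g; lra.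
       apply (Hm i); lia. specialize (Hg (S i) ltac:(lia)); unfold g; lra.
     - pose proof (telescope_incr (fun i => cotp (g i)) k) as T; cbv beta in T.
       rewrite T. apply abs_le_inv in H. apply abs_le_inv in H0. lra.
       intros i Hi. apply cotp_decr. specialize (Hg (S i) ltac:(lia)); unfold g; lra.
       apply (Hm i); lia. specialize (Hg i ltac:(lia)); unfold g; lra. }
   pose proof (cotp_bound l Hl).
   assert (Hsum : Cmod (csum (fun i => Cmult (u (S i)) (Cminus (c (S i)) (c i))) k) <= cotp l).
   { eapply Rle_trans. apply Cmod_csum.
     eapply Rle_trans. apply rsum_le with (g := fun i => Rabs (cotp (g (S i)) - cotp (g i)) / 2).
     intros; apply Hd; auto. unfold Rdiv. rewrite (rsum_ext _ (fun i => /2 * Rabs (cotp (g (S i)) - cotp (g i)))).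
     rewrite rsum_scal. lra. intros; ring. }
   assert (Hu1 : forall i, Cmod (u i) = 1) by (intros; unfold u; apply Cmod_e).
   set (X := csum (fun i => Cmult (u (S i)) (Cminus (c (S i)) (c i))) k) in *.
   assert (A1 : Cmod (Cmult (u (S k)) (c k)) <= /2 + cotp l / 2) by (rewrite Cmod_mult, Hu1, Rmult_1_l; apply Hc; lia).
   assert (A2 : Cmod (Cmult (u O) (c O)) <= /2 + cotp l / 2) by (rewrite Cmod_mult, Hu1, Rmult_1_l; apply Hc; lia).
   eapply Rle_trans. apply Cmod_triangle. rewrite Hu1.
   unfold Cminus. eapply Rle_trans. apply Rplus_le_compat_r. eapply Rle_trans. apply Cmod_triangle.
   rewrite Cmod_opp. apply Rplus_le_compat_r. eapply Rle_trans. apply Cmod_triangle.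
   rewrite Cmod_opp. apply Rplus_le_compat; [apply A1|apply A2].
   assert (4 / l = 4 * (1/l)) by (field; lra). lra.
Qed.

Lemma rsum_split f x y : rsum f (x + y) = rsum f x + rsum (fun i => f (x + i)%nat) y.
Proof. induction y; simpl. rewrite Nat.add_0_r; lra. rewrite Nat.add_succ_r. simpl. rewrite IHy. lra. Qed.
Lemma rsum_zero f n : (forall i, (i < n)%nat -> f i = 0) -> rsum f n = 0.
Proof. intros H. rewrite (rsum_ext f (fun _ => 0)) by auto. rewrite rsum_const; lra. Qed.
Lemma rsum_window f M p n : (p + n <= M)%nat ->
  (forall m, (m < M)%nat -> (m < p \/ p + n <= m)%nat -> f m = 0) ->
  rsum f M = rsum (fun i => f (p + i)%nat) n.
Proof. intros Hle H. replace M with (p + n + (M - (p + n)))%nat by lia.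
 rewrite !rsum_split. rewrite (rsum_zero f p) by (intros; apply H; lia).
 rewrite (rsum_zero (fun i => f (p + n + i)%nat)) by (intros; apply H; lia). lra. Qed.
Lemma rsum_swap (F : nat -> nat -> R) M R0 :
  rsum (fun m => rsum (fun s => F m s) R0) M = rsum (fun s => rsum (fun m => F m s) M) R0.
Proof. induction M; simpl. rewrite rsum_zero; auto. rewrite IHM, <- rsum_plus. auto. Qed.
Lemma rsum_mult f g n : rsum f n * rsum g n = rsum (fun s => rsum (fun t => f s * g t) n) n.
Proof. rewrite Rmult_comm, <- rsum_scal. apply rsum_ext; intros.
 rewrite Rmult_comm, <- rsum_scal. auto. Qed.
Lemma rsum_CS f n : (rsum f n)^2 <= INR n * rsum (fun i => (f i)^2) n.
Proof. induction n. simpl; lra. simpl rsum. rewrite S_INR.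
 assert (H : rsum (fun i => 2 * f i * f n) n <= rsum (fun i => (f i)^2 + (f n)^2) n).
 { apply rsum_le; intros. pose proof (pow2_ge_0 (f i - f n)). nra. }
 rewrite rsum_plus, rsum_const in H.
 replace (rsum (fun i => 2 * f i * f n) n) with (2 * f n * rsum f n) in H.
 2:{ rewrite <- rsum_scal. apply rsum_ext; intros; ring. }
 replace (rsum (fun i => f i * (f i * 1)) n) with (rsum (fun i => f i ^ 2) n) by (apply rsum_ext; intros; ring).
 nra. Qed.
Lemma rsum_ind s x n : (s < n)%nat -> rsum (fun t => if Nat.eq_dec s t then x else 0) n = x.
Proof. induction n; intros H. lia. simpl. destruct (Nat.eq_dec s n).
 - subst. rewrite rsum_zero. lra. intros. destruct Nat.eq_dec; [lia|auto].
 - rewrite IHn by lia. lra. Qed.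

Fixpoint csum_fst f n : fst (csum f n) = rsum (fun i => fst (f i)) n.
Proof. destruct n; simpl; auto. rewrite csum_fst. auto. Qed.
Fixpoint csum_snd f n : snd (csum f n) = rsum (fun i => snd (f i)) n.
Proof. destruct n; simpl; auto. rewrite csum_snd. auto. Qed.
Lemma Cmod_sq z : Cmod z ^ 2 = fst z ^ 2 + snd z ^ 2.
Proof. unfold Cmod. rewrite pow2_sqrt; auto. pose proof (pow2_ge_0 (fst z)); pose proof (pow2_ge_0 (snd z)); lra. Qed.

Definition dlt (d : nat) (th : nat -> R) : nat -> R := fun n => th (n + d)%nat - th n.

Lemma vdC (th : nat -> R) a N R0 B : (1 <= R0 <= N)%nat -> 0 <= B ->
  (forall d, (1 <= d < R0)%nat -> Cmod (S_ (dlt d th) a (N - d)) <= B) ->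
  Cmod (S_ th a N) ^ 2 <= 2 * INR N ^ 2 / INR R0 + 2 * INR N * B.
Proof.
 intros HR HB HD.
 set (M := (N + R0 - 1)%nat).
 set (fw := fun j => th (a + (j - (R0 - 1)))%nat).
 set (co := fun j => if le_lt_dec (R0 - 1) j then if lt_dec j (R0 - 1 + N) then cos (2*PI*fw j) else 0 else 0).
 set (si := fun j => if le_lt_dec (R0 - 1) j then if lt_dec j (R0 - 1 + N) then sin (2*PI*fw j) else 0 else 0).
 assert (Cin : forall i, (i < N)%nat -> co (R0 - 1 + i)%nat = cos (2*PI*th (a+i)%nat) /\
                                          si (R0 - 1 + i)%nat = sin (2*PI*th (a+i)%nat)).
 { intros i Hi. unfold co, si, fw. destruct le_lt_dec; [|lia]. destruct lt_dec; [|lia].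
   replace (R0 - 1 + i - (R0 - 1))%nat with i by lia. auto. }
 assert (Cout : forall j, (j < R0 - 1 \/ R0 - 1 + N <= j)%nat -> co j = 0 /\ si j = 0).
 { intros j Hj. unfold co, si. destruct le_lt_dec; auto. destruct lt_dec; auto. lia. }
 set (Sre := rsum (fun i => cos (2*PI*th (a+i)%nat)) N).
 set (Sim := rsum (fun i => sin (2*PI*th (a+i)%nat)) N).
 assert (HS : Cmod (S_ th a N) ^ 2 = Sre ^ 2 + Sim ^ 2).
 { rewrite Cmod_sq. unfold S_. rewrite csum_fst, csum_snd. auto. }
 set (A := fun m => rsum (fun s => co (m + s)%nat) R0).
 set (Bm := fun m => rsum (fun s => si (m + s)%nat) R0).
 assert (HA : rsum A M = INR R0 * Sre).
 { unfold A. rewrite rsum_swap. rewrite <- rsum_const. apply rsum_ext. intros s Hs.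
   rewrite (rsum_window _ M (R0 - 1 - s) N). apply rsum_ext. intros i Hi.
   replace (R0 - 1 - s + i + s)%nat with (R0 - 1 + i)%nat by lia. apply Cin; auto.
   unfold M; lia. intros m Hm Hm'. apply Cout. lia. }
 assert (HB' : rsum Bm M = INR R0 * Sim).
 { unfold Bm. rewrite rsum_swap. rewrite <- rsum_const. apply rsum_ext. intros s Hs.
   rewrite (rsum_window _ M (R0 - 1 - s) N). apply rsum_ext. intros i Hi.
   replace (R0 - 1 - s + i + s)%nat with (R0 - 1 + i)%nat by lia. apply Cin; auto.
   unfold M; lia. intros m Hm Hm'. apply Cout. lia. }
 set (G := fun s t => rsum (fun m => co (m + s)%nat * co (m + t)%nat + si (m + s)%nat * si (m + t)%nat) M).
 assert (HG0 : forall s t, (s < t < R0)%nat -> G s t <= B).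
 { intros s t Hst. unfold G. set (d := (t - s)%nat).
   rewrite (rsum_window _ M (R0 - 1 - s) (N - d)).
   2:{ unfold M, d; lia. }
   2:{ intros m Hm Hm'. destruct Hm' as [Hm'|Hm'].
       - destruct (Cout (m + s)%nat ltac:(lia)) as [-> ->]. ring.
       - destruct (Cout (m + t)%nat ltac:(unfold d in Hm'; lia)) as [-> ->]. ring. }
   pose proof (HD d ltac:(unfold d; lia)) as Hd.
   eapply Rle_trans. 2: apply Hd. eapply Rle_trans. 2: apply re_le_Cmod.
   eapply Rle_trans. 2: apply Rle_abs. unfold S_. simpl Re. rewrite csum_fst.
   right. apply rsum_ext. intros i Hi.
   replace (R0 - 1 - s + i + s)%nat with (R0 - 1 + i)%nat by lia.
   replace (R0 - 1 - s + i + t)%nat with (R0 - 1 + (i + d))%nat by (unfold d; lia).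
   destruct (Cin i ltac:(lia)) as [-> ->]. destruct (Cin (i+d)%nat ltac:(lia)) as [-> ->].
   unfold dlt, e; simpl. replace (a + i + d)%nat with (a + (i + d))%nat by lia.
   rewrite <- cos_minus, <- cos_neg. f_equal. ring. }
 assert (HG : forall s t, (s < R0)%nat -> (t < R0)%nat -> G s t <= if Nat.eq_dec s t then INR N else B).
 { intros s t Hs Ht. destruct (Nat.eq_dec s t).
   - subst. unfold G. rewrite (rsum_window _ M (R0 - 1 - t) N). 2: unfold M; lia.
     2:{ intros m Hm Hm'. destruct (Cout (m + t)%nat ltac:(lia)) as [-> ->]. ring. }
     right. rewrite <- (Rmult_1_r (INR N)), <- rsum_const. apply rsum_ext. intros i Hi.
     replace (R0 - 1 - t + i + t)%nat with (R0 - 1 + i)%nat by lia.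
     destruct (Cin i Hi) as [-> ->]. pose proof (sin2_cos2 (2*PI*th (a+i)%nat)). unfold Rsqr in H. lra.
   - destruct (lt_dec s t). apply HG0; lia.
     replace (G s t) with (G t s). apply HG0; lia.
     unfold G. apply rsum_ext; intros; ring. }
 assert (Hsq : forall m, A m ^ 2 + Bm m ^ 2 = rsum (fun s => rsum (fun t => co (m + s)%nat * co (m + t)%nat + si (m + s)%nat * si (m + t)%nat) R0) R0).
 { intros m. unfold A, Bm. simpl. rewrite !Rmult_1_r, !rsum_mult, <- rsum_plus.
   apply rsum_ext; intros. rewrite <- rsum_plus. auto. }
 assert (Htot : rsum (fun m => A m ^ 2 + Bm m ^ 2) M <= INR R0 * (INR N + INR R0 * B)).
 { rewrite (rsum_ext _ _ M (fun m _ => Hsq m)). rewrite rsum_swap.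
   rewrite <- rsum_const. apply rsum_le. intros s Hs. rewrite rsum_swap.
   change (rsum (fun t => G s t) R0 <= INR N + INR R0 * B).
   eapply Rle_trans. apply rsum_le with (g := fun t => B + (if Nat.eq_dec s t then INR N - B else 0)).
   intros t Ht. pose proof (HG s t Hs Ht). destruct Nat.eq_dec; lra.
   rewrite rsum_plus, rsum_const, rsum_ind by auto. lra. }
 pose proof (rsum_CS A M). pose proof (rsum_CS Bm M).
 rewrite HA in H. rewrite HB' in H0. rewrite rsum_plus in Htot.
 assert (HR1 : 1 <= INR R0) by (apply (le_INR 1); lia).
 assert (HRN : INR R0 <= INR N) by (apply le_INR; lia).
 assert (HM : INR M <= 2 * INR N). { unfold M. replace (2 * INR N) with (INR (2*N)) by (rewrite mult_INR; simpl; ring). apply le_INR. lia. }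
 assert (HMpos : 0 <= INR M) by apply pos_INR.
 assert (Hfin : INR R0 ^ 2 * (Sre ^ 2 + Sim ^ 2) <= INR M * (INR R0 * (INR N + INR R0 * B))).
 { replace (INR R0 ^ 2 * (Sre ^ 2 + Sim ^ 2)) with ((INR R0 * Sre)^2 + (INR R0 * Sim)^2) by ring.
   apply Rmult_le_compat_l with (r := INR M) in Htot; auto. lra. }
 rewrite HS.
 apply Rmult_le_reg_l with (INR R0 ^ 2). nra.
 eapply Rle_trans. apply Hfin.
 replace (INR R0 ^ 2 * (2 * INR N ^ 2 / INR R0 + 2 * INR N * B)) with
   (INR R0 * (2 * INR N) * (INR N + INR R0 * B)) by (field; lra).
 assert (HX: 0 <= INR R0 * (INR N + INR R0 * B)) by (apply Rmult_le_pos; nra).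
 pose proof (Rmult_le_compat_r _ _ _ HX HM). lra.
Qed.

Fixpoint dlts (rs : list nat) (th : nat -> R) : nat -> R :=
  match rs with [] => th | r :: rs' => dlts rs' (dlt r th) end.
Fixpoint okrs (T : R) (rs : list nat) : Prop :=
  match rs with [] => True | r :: rs' => (1 <= r)%nat /\ INR r <= T^2 /\ okrs (T^2) rs' end.
Fixpoint U (p : nat) (N T B : R) : R :=
  match p with O => B | S p' => 2*N/T + sqrt (2*N) + sqrt (2*N*U p' N (T^2) B) end.

Lemma U_nonneg p : forall N T B, 0 <= N -> 0 < T -> 0 <= B -> 0 <= U p N T B.
Proof. induction p; cbn [U]; intros; auto. pose proof (sqrt_pos (2*N)). pose proof (sqrt_pos (2 * N * U p N (T ^ 2) B)).
 assert (0 <= 2*N/T) by (unfold Rdiv; apply Rmult_le_pos; [lra| left; apply Rinv_0_lt_compat; auto]). lra. Qed.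
Lemma U_mono p : forall N1 N2 T B, 0 <= N1 <= N2 -> 0 < T -> 0 <= B -> U p N1 T B <= U p N2 T B.
Proof. induction p; cbn [U]; intros; [lra|].
 assert (2*N1/T <= 2*N2/T) by (unfold Rdiv; apply Rmult_le_compat_r; [left; apply Rinv_0_lt_compat; auto|lra]).
 assert (sqrt (2*N1) <= sqrt (2*N2)) by (apply sqrt_le_1_alt; lra).
 assert (0 < T^2) by (apply pow_lt; auto).
 assert (sqrt (2 * N1 * U p N1 (T ^ 2) B) <= sqrt (2 * N2 * U p N2 (T ^ 2) B)).
 { apply sqrt_le_1_alt. pose proof (IHp N1 N2 (T^2) B ltac:(lra) H4 H1). pose proof (U_nonneg p N1 (T^2) B ltac:(lra) H4 H1).
   apply Rmult_le_compat; nra. }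
 lra. Qed.

Lemma sqrt_plus_le x y : 0 <= x -> 0 <= y -> sqrt (x + y) <= sqrt x + sqrt y.
Proof. intros. pose proof (sqrt_pos x); pose proof (sqrt_pos y).
 rewrite <- (sqrt_pow2 (sqrt x + sqrt y)) by lra. apply sqrt_le_1_alt.
 replace ((sqrt x + sqrt y)^2) with (Rsqr (sqrt x) + Rsqr (sqrt y) + 2 * sqrt x * sqrt y) by (unfold Rsqr; ring).
 rewrite !Rsqr_sqrt by auto. nra. Qed.

Lemma floor_half y : 1 <= y -> exists n : nat, (1 <= n)%nat /\ y / 2 <= INR n <= y.
Proof. intros Hy. destruct (base_Int_part y) as [H1 H2].
 assert (Hz : (1 <= Int_part y)%Z). { apply le_IZR. destruct (Rle_or_lt 1 (IZR (Int_part y))); auto.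
   exfalso. assert (IZR (Int_part y) <= 0). { apply IZR_le. apply lt_IZR in H. lia. } lra. }
 exists (Z.to_nat (Int_part y)). rewrite INR_IZR_INZ, Z2Nat.id by lia. split. lia.
 split; [|lra]. assert (1 <= IZR (Int_part y)) by (apply IZR_le; lia). lra. Qed.

Lemma Cmod_from_sq z b1 b2 : 0 <= b1 -> 0 <= b2 -> Cmod z ^ 2 <= b1 + b2 -> Cmod z <= sqrt b1 + sqrt b2.
Proof. intros. eapply Rle_trans. 2: apply sqrt_plus_le; auto.
 rewrite <- (sqrt_pow2 (Cmod z)) by apply Cmod_ge_0. apply sqrt_le_1_alt. auto. Qed.

Lemma S_zero th a : S_ th a 0 = RtoC 0.
Proof. reflexivity. Qed.

Lemma claim p : forall th a N T B, 1 <= T -> 0 <= B ->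
  (forall rs, length rs = p -> okrs T rs -> forall a' N', (a <= a')%nat -> (a' + N' <= a + N)%nat ->
     Cmod (S_ (dlts rs th) a' N') <= B) ->
  Cmod (S_ th a N) <= U p (INR N) T B.
Proof.
 induction p; intros th a N T B HT HB H.
 - simpl. apply (H [] eq_refl I a N); lia.
 - destruct N as [|N0].
   + rewrite S_zero, Cmod_0. apply U_nonneg; simpl; lra.
   + set (N := S N0) in *.
     assert (HN : 1 <= INR N) by (apply (le_INR 1); unfold N; lia).
     assert (HT2 : 1 <= T^2) by nra.
     destruct (floor_half (T^2) HT2) as [R1 [HR1 [HR1a HR1b]]].
     set (R0 := Nat.min R1 N).
     set (B1 := U p (INR N) (T^2) B).
     assert (HB1 : 0 <= B1) by (apply U_nonneg; lra).
     assert (HR0 : (1 <= R0 <= N)%nat) by (unfold R0, N; lia).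
     assert (Hv := vdC th a N R0 B1 HR0 HB1).
     assert (Hin : forall d, (1 <= d < R0)%nat -> Cmod (S_ (dlt d th) a (N - d)) <= B1).
     { intros d Hd. eapply Rle_trans. apply (IHp (dlt d th) a (N - d)%nat (T^2) B HT2 HB).
       - intros rs Hl Hok a' N' Ha' HN'. apply (H (d :: rs)). simpl; auto.
         simpl. split. lia. split; auto. apply Rle_trans with (INR R1); auto. apply le_INR. unfold R0 in Hd; lia.
         lia. lia.
       - apply U_mono; try lra. split. apply pos_INR. apply le_INR; lia. }
     specialize (Hv Hin).
     assert (H2 : 0 <= 2 * INR N ^ 2 / INR R0).
     { unfold Rdiv. apply Rmult_le_pos. nra. left; apply Rinv_0_lt_compat. apply (lt_INR 0); lia. }
     assert (H2b : 0 <= 2 * INR N * B1) by (apply Rmult_le_pos; lra).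
     pose proof (Cmod_from_sq _ _ _ H2 H2b Hv) as Hc.
     cbn [U]. eapply Rle_trans. apply Hc.
     assert (sqrt (2 * INR N ^ 2 / INR R0) <= 2 * INR N / T + sqrt (2 * INR N)).
     { pose proof (sqrt_pos (2 * INR N)).
       assert (0 <= 2 * INR N / T) by (unfold Rdiv; apply Rmult_le_pos; [lra| left; apply Rinv_0_lt_compat; lra]).
       destruct (Nat.le_ge_cases R1 N) as [Hle|Hge].
       - assert (R0 = R1) by (unfold R0; lia). rewrite H3.
         assert (sqrt (2 * INR N ^ 2 / INR R1) <= 2 * INR N / T); [|lra].
         rewrite <- (sqrt_pow2 (2 * INR N / T)) by auto. apply sqrt_le_1_alt.
         assert (0 < INR R1) by (apply (lt_INR 0); lia).
         apply Rmult_le_reg_r with (INR R1 * T^2). nra.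
         replace (2 * INR N ^ 2 / INR R1 * (INR R1 * T ^ 2)) with (2 * INR N ^ 2 * T^2) by (field; lra).
         replace ((2 * INR N / T) ^ 2 * (INR R1 * T ^ 2)) with (4 * INR N ^ 2 * INR R1) by (field; lra).
         assert (0 <= INR N ^ 2) by nra. nra.
       - assert (R0 = N) by (unfold R0; lia). rewrite H3.
         replace (2 * INR N ^ 2 / INR N) with (2 * INR N) by (field; lra). lra. }
     unfold B1 in *. lra.
Qed.

Lemma Rpower_ge1 x y : 1 <= x -> 0 <= y -> 1 <= Rpower x y.
Proof. intros. rewrite <- (Rpower_O x) by lra. apply Rle_Rpower; lra. Qed.

Lemma U_bound p : exists K, 0 < K /\ forall N T B, 1 <= N -> 1 <= T -> 1 <= B ->
  U p N T B <= K * (N / T + Rpower N (1 - / 2^p) * Rpower B (/ 2^p)).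
Proof.
 induction p.
 - exists 1. split. lra. intros. simpl. replace (1 - /1) with 0 by field. replace (/1) with 1 by field.
   rewrite Rpower_O, Rpower_1 by lra. assert (0 <= N/T) by (unfold Rdiv; apply Rmult_le_pos; [lra|left; apply Rinv_0_lt_compat; lra]). lra.
 - destruct IHp as [K [HK IH]].
   exists (2 + sqrt 2 + sqrt (2*K)). split. pose proof (sqrt_pos 2); pose proof (sqrt_pos (2*K)); lra.
   intros N T B HN HT HB. cbn [U].
   set (w := / 2^p).
   assert (Hw : 0 < w <= 1). { unfold w. assert (1 <= 2^p) by (apply pow_R1_Rle; lra). split.
     apply Rinv_0_lt_compat; lra. rewrite <- Rinv_1. apply Rinv_le_contravar; lra. }
   assert (Hw2 : / 2 ^ S p = w / 2) by (unfold w; simpl; field; apply pow_nonzero; lra).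
   rewrite Hw2.
   set (Y := Rpower N (1 - w / 2) * Rpower B (w / 2)).
   assert (HNT : 0 <= N / T) by (unfold Rdiv; apply Rmult_le_pos; [lra|left; apply Rinv_0_lt_compat; lra]).
   assert (HY1 : sqrt N <= Y).
   { unfold Y. rewrite <- Rpower_sqrt by lra. rewrite <- (Rmult_1_r (Rpower N (/2))).
     apply Rmult_le_compat. left; apply exp_pos. lra. apply Rle_Rpower; lra. apply Rpower_ge1; lra. }
   assert (HX : sqrt (N * (Rpower N (1 - w) * Rpower B w)) = Y).
   { unfold Y. rewrite <- Rpower_sqrt. 2:{ apply Rmult_lt_0_compat. lra. apply Rmult_lt_0_compat; apply exp_pos. }
     rewrite <- Rmult_assoc. rewrite <- (Rpower_1 N) at 1 by lra. rewrite <- Rpower_plus.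
     rewrite <- Rpower_mult_distr by (apply exp_pos). rewrite !Rpower_mult. f_equal; f_equal; field. }
   pose proof (IH N (T^2) B HN ltac:(nra) HB) as HU.
   assert (HU0 : 0 <= U p N (T ^ 2) B) by (apply U_nonneg; nra).
   assert (Hs1 : sqrt (2*N) = sqrt 2 * sqrt N) by (apply sqrt_mult; lra).
   fold w in HU.
   set (Z := Rpower N (1 - w) * Rpower B w) in *.
   assert (HZ : 0 <= N * Z) by (apply Rmult_le_pos; [lra| apply Rmult_le_pos; left; apply exp_pos]).
   assert (Hs2a : 2 * N * U p N (T ^ 2) B <= (2 * K) * ((N/T)^2 + N * Z)).
   { replace ((2 * K) * ((N/T)^2 + N * Z)) with (2 * N * (K * (N / T ^ 2 + Z))) by (field; lra).
     apply Rmult_le_compat_l; lra. }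
   assert (Hs2 : sqrt (2 * N * U p N (T ^ 2) B) <= sqrt (2*K) * (N / T + Y)).
   { eapply Rle_trans. apply sqrt_le_1_alt. apply Hs2a.
     rewrite sqrt_mult by nra. apply Rmult_le_compat_l. apply sqrt_pos.
     eapply Rle_trans. apply sqrt_plus_le. nra. auto.
     rewrite HX, sqrt_pow2 by auto. lra. }
   assert (0 <= sqrt 2) by apply sqrt_pos. assert (0 <= sqrt (2*K)) by apply sqrt_pos.
   assert (2 * N / T = 2 * (N / T)) by (field; lra).
   rewrite Hs1.
   assert (0 <= Y) by (pose proof (sqrt_pos N); lra).
   assert (sqrt 2 * sqrt N <= sqrt 2 * Y) by (apply Rmult_le_compat_l; auto).
   assert (0 <= sqrt 2 * (N/T)) by (apply Rmult_le_pos; auto).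
   replace ((2 + sqrt 2 + sqrt (2 * K)) * (N / T + Y)) with
     (2*(N/T) + 2*Y + sqrt 2 * (N/T) + sqrt 2 * Y + sqrt (2*K) * (N/T + Y)) by ring.
   lra.
Qed.

Lemma dpl_plus f g x a b : derivable_pt_lim f x a -> derivable_pt_lim g x b ->
  derivable_pt_lim (fun y => f y + g y) x (a + b).
Proof. intros. apply (derivable_pt_lim_plus f g x a b); auto. Qed.
Lemma dpl_minus f g x a b : derivable_pt_lim f x a -> derivable_pt_lim g x b ->
  derivable_pt_lim (fun y => f y - g y) x (a - b).
Proof. intros. apply (derivable_pt_lim_minus f g x a b); auto. Qed.
Lemma dpl_scal k f x a : derivable_pt_lim f x a -> derivable_pt_lim (fun y => k * f y) x (k * a).
Proof. intros. apply (derivable_pt_lim_scal f k x a); auto. Qed.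
Lemma dpl_shift f x c a : derivable_pt_lim f (x + c) a -> derivable_pt_lim (fun y => f (y + c)) x a.
Proof. intros. replace a with (a * (1 + 0)) by ring.
 apply (derivable_pt_lim_comp (fun y => y + c) f x (1 + 0) a).
 apply (derivable_pt_lim_plus id (fct_cte c) x 1 0). apply derivable_pt_lim_id. apply derivable_pt_lim_const.
 auto. Qed.
Lemma dpl_ext f g x a : (forall y, f y = g y) -> derivable_pt_lim f x a -> derivable_pt_lim g x a.
Proof. intros He H. unfold derivable_pt_lim in *. intros eps Heps. destruct (H eps Heps) as [d Hd].
 exists d. intros h Hh Hh'. rewrite <- !He. apply Hd; auto. Qed.
Lemma dpl_rsum (f : nat -> R -> R) (f' : nat -> R) x n :
  (forall i, (i < n)%nat -> derivable_pt_lim (f i) x (f' i)) ->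
  derivable_pt_lim (fun y => rsum (fun i => f i y) n) x (rsum f' n).
Proof. induction n; intros H; simpl.
 - apply (dpl_ext (fct_cte 0)). intros; reflexivity. apply derivable_pt_lim_const.
 - apply dpl_plus. apply IHn; intros; apply H; lia. apply H; lia. Qed.

Definition rdlt (r : nat) (f : R -> R) : R -> R := fun x => f (x + INR r) - f x.
Fixpoint rdlts (rs : list nat) (f : R -> R) : R -> R :=
  match rs with [] => f | r :: rs' => rdlts rs' (rdlt r f) end.
Definition prodr (rs : list nat) : R := fold_right (fun r acc => INR r * acc) 1 rs.
Definition sumr (rs : list nat) : R := fold_right (fun r acc => INR r + acc) 0 rs.

Lemma rdlts_ext rs : forall f g, (forall y, f y = g y) -> forall x, rdlts rs f x = rdlts rs g x.
Proof. induction rs; simpl; intros f g H x; auto. apply IHrs. intros; unfold rdlt; rewrite !H; auto. Qed.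

Lemma MVTit rs : forall (phi : nat -> R -> R) x,
  (forall j y, 0 < y -> derivable_pt_lim (phi j) y (phi (S j) y)) -> 0 < x ->
  exists xi, x <= xi <= x + sumr rs /\ rdlts rs (phi O) x = prodr rs * phi (length rs) xi.
Proof.
 induction rs as [|r rs IH]; intros phi x Hd Hx.
 - exists x. simpl. split. lra. ring.
 - set (psi := fun j => rdlt r (phi j)).
   assert (Hpsi : forall j y, 0 < y -> derivable_pt_lim (psi j) y (psi (S j) y)).
   { intros j y Hy. unfold psi, rdlt. apply dpl_minus. apply dpl_shift. apply Hd. pose proof (pos_INR r); lra.
     apply Hd; auto. }
   destruct (IH psi x Hpsi Hx) as [xi [Hxi Heq]].
   simpl rdlts. change (rdlt r (phi O)) with (psi O). rewrite Heq. unfold psi, rdlt.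
   destruct r as [|r'].
   + exists xi. simpl. split. lra. replace (xi + 0) with xi by ring. ring.
   + assert (Hr : 0 < INR (S r')) by (apply (lt_INR 0); lia).
     destruct (MVT_cor2 (phi (length rs)) (phi (S (length rs))) xi (xi + INR (S r')) ltac:(lra)) as [eta [He He']].
     { intros c Hc. apply Hd. lra. }
     assert (E1 : sumr (S r' :: rs) = INR (S r') + sumr rs) by reflexivity.
     assert (E2 : prodr (S r' :: rs) = INR (S r') * prodr rs) by reflexivity.
     exists eta. rewrite E1, E2. split. lra.
     rewrite He. replace (xi + INR (S r') - xi) with (INR (S r')) by ring. simpl length. ring.
Qed.

Fixpoint binom (n k : nat) : nat :=
  match n, k with
  | _, O => 1%nat
  | O, S _ => 0%nat
  | S n', S k' => (binom n' k' + binom n' (S k'))%nat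
  end.
Lemma binom_big n : forall k, (n < k)%nat -> binom n k = 0%nat.
Proof. induction n; intros k Hk; destruct k; simpl; try lia; auto. rewrite !IHn by lia. auto. Qed.
Lemma binom_diag n : binom n n = 1%nat.
Proof. induction n; simpl; auto. rewrite IHn, binom_big by lia. auto. Qed.

Definition Dk (k : nat) (f : R -> R) : R -> R := rdlts (repeat 1%nat k) f.

Lemma rdlts_rdlt rs : forall f r x, rdlts rs (rdlt r f) x = rdlts rs f (x + INR r) - rdlts rs f x.
Proof. induction rs as [|r' rs IH]; intros f r x; simpl; auto.
 rewrite (rdlts_ext rs (rdlt r' (rdlt r f)) (rdlt r (rdlt r' f))).
 apply IH. intros y. unfold rdlt. replace (y + INR r' + INR r) with (y + INR r + INR r') by ring. ring. Qed.

Lemma Dk_S k f x : Dk (S k) f x = Dk k f (x + 1) - Dk k f x.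
Proof. unfold Dk. simpl. rewrite rdlts_rdlt. simpl INR. auto. Qed.

Lemma rsum_shift f n : rsum f (S n) = f O + rsum (fun i => f (S i)) n.
Proof. induction n; simpl. ring. simpl in IHn. rewrite IHn. ring. Qed.

Lemma newton l : forall f x, f (x + INR l) = rsum (fun k => INR (binom l k) * Dk k f x) (S l).
Proof.
 induction l; intros f x.
 - simpl. unfold Dk. simpl. replace (x + 0) with x by ring. ring.
 - replace (x + INR (S l)) with ((x + 1) + INR l) by (rewrite S_INR; ring).
   rewrite IHl.
   rewrite (rsum_ext _ (fun k => INR (binom l k) * Dk k f x + INR (binom l k) * Dk (S k) f x)).
   2:{ intros i Hi. rewrite Dk_S. ring. }
   rewrite rsum_plus.
   rewrite (rsum_shift (fun k => INR (binom (S l) k) * Dk k f x)).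
   rewrite (rsum_shift (fun k => INR (binom l k) * Dk k f x)).
   simpl binom at 1.
   rewrite (rsum_ext (fun i => INR (binom (S l) (S i)) * Dk (S i) f x)
             (fun i => INR (binom l i) * Dk (S i) f x + INR (binom l (S i)) * Dk (S i) f x)).
   2:{ intros i Hi. simpl binom. rewrite plus_INR. ring. }
   rewrite rsum_plus.
   replace (rsum (fun i => INR (binom l (S i)) * Dk (S i) f x) (S l)) with
     (rsum (fun i => INR (binom l (S i)) * Dk (S i) f x) l) by
     (cbn [rsum]; rewrite (binom_big l (S l)) by lia; simpl INR; ring).
   replace (binom l 0) with 1%nat by (destruct l; auto).
   replace (binom (S l) 0) with 1%nat by auto. ring.
Qed.

Definition Bk (L : nat) (h : nat -> Z) (k : nat) : R := rsum (fun l => IZR (h l) * INR (binom l k)) L.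
Definition Gb (L : nat) (h : nat -> Z) (b x : R) : R := rsum (fun l => IZR (h l) * Rpower (x + INR l) b) L.
Fixpoint Pk (b : R) (k : nat) : R := match k with O => 1 | S k' => Pk b k' * (b - INR k') end.
Definition famb (b : R) (j : nat) (t : R) : R := Pk b j * Rpower t (b - INR j).

Lemma famb_deriv b j t : 0 < t -> derivable_pt_lim (famb b j) t (famb b (S j) t).
Proof. intros Ht. unfold famb. apply (dpl_ext (fun y => Pk b j * Rpower y (b - INR j))). auto.
 replace (Pk b (S j) * Rpower t (b - INR (S j))) with (Pk b j * ((b - INR j) * Rpower t (b - INR j - 1))).
 apply dpl_scal. apply derivable_pt_lim_power; auto.
 simpl Pk. rewrite S_INR. replace (b - (INR j + 1)) with (b - INR j - 1) by ring. ring. Qed.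

Lemma sumr_repeat k : sumr (repeat 1%nat k) = INR k.
Proof. induction k; simpl; auto. unfold sumr in *. simpl. rewrite IHk. destruct k; simpl; ring. Qed.
Lemma prodr_repeat k : prodr (repeat 1%nat k) = 1.
Proof. induction k; simpl; auto. unfold prodr in *. simpl. rewrite IHk. ring. Qed.

Lemma Dk_famb b k x : 0 < x -> exists xi, x <= xi <= x + INR k /\ Dk k (famb b 0) x = Pk b k * Rpower xi (b - INR k).
Proof. intros Hx. destruct (MVTit (repeat 1%nat k) (famb b) x (fun j y Hy => famb_deriv b j y Hy) Hx) as [xi [H1 H2]].
 exists xi. rewrite sumr_repeat in H1. split; auto. unfold Dk. rewrite H2, prodr_repeat, repeat_length. unfold famb. ring. Qed.

Lemma rsum_extend f l L : (l <= L)%nat -> (forall k, (l <= k)%nat -> f k = 0) -> rsum f l = rsum f L.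
Proof. intros. replace L with (l + (L - l))%nat by lia. rewrite rsum_split. rewrite (rsum_zero (fun i => f (l + i)%nat)).
 ring. intros; apply H0; lia. Qed.

Lemma G_decomp L h b x : 0 < x -> Gb L h b x = rsum (fun k => Bk L h k * Dk k (famb b 0) x) L.
Proof. intros Hx. unfold Gb, Bk.
 rewrite (rsum_ext _ (fun l => rsum (fun k => IZR (h l) * INR (binom l k) * Dk k (famb b 0) x) L)).
 - rewrite rsum_swap. apply rsum_ext. intros k Hk. rewrite Rmult_comm, <- rsum_scal. apply rsum_ext; intros; ring.
 - intros l Hl. replace (Rpower (x + INR l) b) with (famb b 0 (x + INR l)) by (unfold famb; simpl Pk; simpl INR; rewrite Rminus_0_r, Rmult_1_l; auto).
   rewrite newton. rewrite <- rsum_scal. rewrite (rsum_extend _ (S l) L).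
   apply rsum_ext; intros; ring. lia. intros k Hk. rewrite binom_big by lia. simpl; ring. Qed.

Lemma Rabs_rsum f n : Rabs (rsum f n) <= rsum (fun i => Rabs (f i)) n.
Proof. induction n; simpl. rewrite Rabs_R0; lra. eapply Rle_trans. apply Rabs_triang. lra. Qed.
Lemma rsum_ge_term f n j : (forall i, (i < n)%nat -> 0 <= f i) -> (j < n)%nat -> f j <= rsum f n.
Proof. induction n; intros H Hj. lia. simpl. destruct (Nat.eq_dec j n).
 - subst. assert (0 <= rsum f n) by (apply rsum_nonneg; intros; apply H; lia). lra.
 - assert (f j <= rsum f n) by (apply IHn; [intros; apply H; lia| lia]). assert (0 <= f n) by (apply H; lia). lra. Qed.

Lemma exp_le x y : x <= y -> exp x <= exp y.
Proof. intros [H|H]. left; apply exp_increasing; auto. subst; lra. Qed.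

Definition rho (L : nat) (e0 : R) : R := Rpower (1 + INR L) (Rabs e0).

Lemma rho_pos L e0 : 0 < rho L e0.
Proof. apply exp_pos. Qed.

Lemma rho_bound L e0 x xi : 1 <= x -> x <= xi <= x + INR L ->
  exists t, Rpower xi e0 = Rpower x e0 * t /\ / rho L e0 <= t <= rho L e0.
Proof. intros Hx Hxi. exists (Rpower (xi / x) e0). split.
 - rewrite Rpower_mult_distr. f_equal. field. lra. lra. apply Rdiv_lt_0_compat; lra.
 - assert (Hq : 1 <= xi / x <= 1 + INR L). { split. apply Rmult_le_reg_r with x. lra. field_simplify; lra.
     apply Rmult_le_reg_r with x. lra. field_simplify. 2: lra. pose proof (pos_INR L). nra. }
   assert (0 <= ln (xi / x)) by (rewrite <- ln_1; apply ln_le; lra).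
   assert (ln (xi / x) <= ln (1 + INR L)) by (apply ln_le; lra).
   assert (Habs : Rabs (e0 * ln (xi / x)) <= Rabs e0 * ln (1 + INR L)).
   { rewrite Rabs_mult, (Rabs_right (ln (xi/x))) by lra. apply Rmult_le_compat_l. apply Rabs_pos. auto. }
   apply abs_le_inv in Habs. unfold rho, Rpower. rewrite <- exp_Ropp. split; apply exp_le; lra. Qed.

Lemma Rpower_le_mono_exp x a b0 : 1 <= x -> a <= b0 -> Rpower x a <= Rpower x b0.
Proof. intros. apply Rle_Rpower; auto. Qed.


Definition beta (L k : nat) : R := rsum (fun l => INR (binom l k)) L.
Definition term (L : nat) (b : R) (k : nat) : R := beta L k * Rabs (Pk b k) * rho L (b - INR k).
Definition Ec (L : nat) (b : R) : R := rsum (term L b) L.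
Definition ell (L : nat) (b : R) (k0 : nat) : R := Rabs (Pk b k0) / rho L (b - INR k0).
Definition dl (L : nat) (b : R) (k0 : nat) : R := ell L b k0 / (2 * Ec L b).
Definition lo (L : nat) (b : R) (k0 : nat) : R := ell L b k0 / 2.
Definition hi (L : nat) (b : R) (k0 : nat) : R := ell L b k0 / 2 + Rabs (Pk b k0) * rho L (b - INR k0).

Lemma beta_nonneg L k : 0 <= beta L k.
Proof. apply rsum_nonneg. intros; apply pos_INR. Qed.
Lemma term_nonneg L b k : 0 <= term L b k.
Proof. unfold term. apply Rmult_le_pos. apply Rmult_le_pos. apply beta_nonneg. apply Rabs_pos. left; apply rho_pos. Qed.
Lemma beta_k0 L k0 : (k0 < L)%nat -> 1 <= beta L k0.
Proof. intros. unfold beta. replace 1 with (INR (binom k0 k0)) by (rewrite binom_diag; auto).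
 apply (rsum_ge_term (fun l => INR (binom l k0))). intros; apply pos_INR. auto. Qed.
Lemma Ec_pos L b k0 : (k0 < L)%nat -> Pk b k0 <> 0 -> 0 < Ec L b.
Proof. intros. apply Rlt_le_trans with (term L b k0).
 unfold term. apply Rmult_lt_0_compat. apply Rmult_lt_0_compat. pose proof (beta_k0 L k0 H); lra.
 apply Rabs_pos_lt; auto. apply rho_pos.
 apply rsum_ge_term; auto. intros; apply term_nonneg. Qed.
Lemma ell_pos L b k0 : Pk b k0 <> 0 -> 0 < ell L b k0.
Proof. intros. unfold ell. apply Rdiv_lt_0_compat. apply Rabs_pos_lt; auto. apply rho_pos. Qed.
Lemma dl_pos L b k0 : (k0 < L)%nat -> Pk b k0 <> 0 -> 0 < dl L b k0.
Proof. intros. unfold dl. apply Rdiv_lt_0_compat. apply ell_pos; auto. pose proof (Ec_pos L b k0 H H0); lra. Qed.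

Lemma Bk_bound L h H k : (forall l, (l < L)%nat -> Rabs (IZR (h l)) <= H) -> Rabs (Bk L h k) <= H * beta L k.
Proof. intros HH. unfold Bk, beta. eapply Rle_trans. apply Rabs_rsum. rewrite <- rsum_scal. apply rsum_le.
 intros i Hi. rewrite Rabs_mult, (Rabs_right (INR _)) by (apply Rle_ge, pos_INR).
 apply Rmult_le_compat_r. apply pos_INR. auto. Qed.

Lemma Dk_bound L b k x : (k <= L)%nat -> 1 <= x ->
  Rabs (Dk k (famb b 0) x) <= Rabs (Pk b k) * rho L (b - INR k) * Rpower x (b - INR k).
Proof. intros Hk Hx. destruct (Dk_famb b k x ltac:(lra)) as [xi [Hxi ->]].
 assert (INR k <= INR L) by (apply le_INR; auto).
 destruct (rho_bound L (b - INR k) x xi Hx ltac:(lra)) as [t [Ht1 Ht2]].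
 rewrite Ht1. rewrite Rabs_mult, Rabs_mult. rewrite (Rabs_right (Rpower x _)) by (left; apply exp_pos).
 assert (0 < / rho L (b - INR k)) by (apply Rinv_0_lt_compat, rho_pos).
 rewrite (Rabs_right t) by lra. pose proof (Rabs_pos (Pk b k)). pose proof (exp_pos ((b - INR k) * ln x)).
 unfold Rpower. assert (Rabs (Pk b k) * t <= Rabs (Pk b k) * rho L (b - INR k)) by (apply Rmult_le_compat_l; lra).
 nra. Qed.

Lemma lead L h b k0 H x :
  (k0 < L)%nat ->
  (forall k, (k < k0)%nat -> Bk L h k = 0) ->
  1 <= Rabs (Bk L h k0) ->
  (forall l, (l < L)%nat -> Rabs (IZR (h l)) <= H) ->
  Pk b k0 <> 0 ->
  1 <= x -> H <= dl L b k0 * x ->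
  0 < (Bk L h k0 * Pk b k0) * Gb L h b x /\
  lo L b k0 * Rabs (Bk L h k0) * Rpower x (b - INR k0) <= Rabs (Gb L h b x) /\
  Rabs (Gb L h b x) <= hi L b k0 * Rabs (Bk L h k0) * Rpower x (b - INR k0).
Proof.
 intros Hk0 Hz HB1 HH HP Hx Hdl.
 assert (HH0 : 0 <= H) by (eapply Rle_trans; [apply Rabs_pos| apply (HH 0%nat); lia]).
 rewrite G_decomp by lra.
 set (D := fun k => Dk k (famb b 0) x).
 set (m := (L - k0 - 1)%nat).
 assert (HL : L = (k0 + S m)%nat) by (unfold m; lia).
 set (f := fun k => Bk L h k * D k).
 change (rsum (fun k => Bk L h k * Dk k (famb b 0) x) L) with (rsum f L).
 replace (rsum f L) with (rsum f (k0 + S m)) by (rewrite <- HL; auto).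
 rewrite rsum_split, rsum_shift, (rsum_zero f k0) by (intros; unfold f; rewrite Hz; auto; ring).
 rewrite Nat.add_0_r, Rplus_0_l.
 set (Err := rsum (fun i => f (k0 + S i)%nat) m).
 set (X := Rpower x (b - INR k0)).
 set (X1 := Rpower x (b - INR k0 - 1)).
 assert (HX : X = X1 * x). { unfold X, X1. rewrite <- (Rpower_1 x) at 3 by lra. rewrite <- Rpower_plus. f_equal; ring. }
 assert (HX1 : 0 < X1) by apply exp_pos.
 assert (HErr : Rabs Err <= H * X1 * Ec L b).
 { unfold Err. eapply Rle_trans. apply Rabs_rsum.
   apply Rle_trans with (rsum (fun i => H * X1 * term L b (k0 + S i)%nat) m).
   - apply rsum_le. intros i Hi. unfold f. rewrite Rabs_mult.
     set (k := (k0 + S i)%nat).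
     pose proof (Bk_bound L h H k HH). pose proof (Dk_bound L b k x ltac:(unfold k, m in *; lia) Hx).
     assert (Rpower x (b - INR k) <= X1). { unfold X1. apply Rle_Rpower; auto.
       assert (INR k0 + 1 <= INR k) by (rewrite <- S_INR; apply le_INR; unfold k; lia). lra. }
     unfold term. pose proof (beta_nonneg L k). pose proof (Rabs_pos (Pk b k)). pose proof (rho_pos L (b - INR k)).
     pose proof (Rabs_pos (Bk L h k)). pose proof (Rabs_pos (D k)).
     apply Rle_trans with ((H * beta L k) * (Rabs (Pk b k) * rho L (b - INR k) * X1)).
     apply Rmult_le_compat; auto. unfold D. eapply Rle_trans. apply H1.
     apply Rmult_le_compat_l. apply Rmult_le_pos; lra. auto. right; ring.
   - rewrite rsum_scal. apply Rmult_le_compat_l. apply Rmult_le_pos; lra.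
     unfold Ec. replace (rsum (term L b) L) with (rsum (term L b) (k0 + S m)) by (rewrite <- HL; auto).
     rewrite rsum_split, rsum_shift.
     assert (0 <= rsum (term L b) k0) by (apply rsum_nonneg; intros; apply term_nonneg).
     pose proof (term_nonneg L b (k0 + 0)). rewrite Nat.add_0_r in *. lra. }
 assert (HEc := Ec_pos L b k0 Hk0 HP).
 assert (Hell := ell_pos L b k0 HP).
 assert (HErr2 : Rabs Err <= ell L b k0 / 2 * X).
 { eapply Rle_trans. apply HErr. rewrite HX.
   apply Rle_trans with (dl L b k0 * x * X1 * Ec L b).
   apply Rmult_le_compat_r. lra. apply Rmult_le_compat_r; lra.
   unfold dl. right. field. lra. }
 destruct (Dk_famb b k0 x ltac:(lra)) as [xi [Hxi HD]].
 assert (INR k0 <= INR L) by (apply le_INR; lia).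
 destruct (rho_bound L (b - INR k0) x xi Hx ltac:(lra)) as [t [Ht1 Ht2]].
 fold X in Ht1.
 assert (HDk : D k0 = Pk b k0 * X * t) by (unfold D; rewrite HD, Ht1; ring).
 unfold f. rewrite HDk.
 set (Bv := Bk L h k0) in *. set (P := Pk b k0) in *. set (rh := rho L (b - INR k0)) in *.
 assert (Hrh : 0 < rh) by apply rho_pos.
 assert (HXp : 0 < X) by (rewrite HX; nra).
 assert (Hti : 0 < / rh) by (apply Rinv_0_lt_compat; auto).
 assert (Ht0 : 0 < t) by lra.
 assert (Hell' : ell L b k0 = Rabs P / rh) by reflexivity.
 assert (HPt : Rabs P / rh <= Rabs P * t). { unfold Rdiv. apply Rmult_le_compat_l. apply Rabs_pos. lra. }
 assert (HBv : 0 < Rabs Bv) by lra.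
 assert (HLead : Rabs Bv * ell L b k0 * X <= Rabs (Bv * (P * X * t))).
 { rewrite !Rabs_mult, (Rabs_right X), (Rabs_right t) by lra. rewrite Hell'.
   assert (Rabs Bv * (Rabs P / rh) * X <= Rabs Bv * (Rabs P * t) * X).
   { apply Rmult_le_compat_r. lra. apply Rmult_le_compat_l; lra. } nra. }
 assert (HLead2 : Rabs (Bv * (P * X * t)) <= Rabs Bv * (Rabs P * rh) * X).
 { rewrite !Rabs_mult, (Rabs_right X), (Rabs_right t) by lra.
   assert (Rabs P * t <= Rabs P * rh) by (apply Rmult_le_compat_l; [apply Rabs_pos|lra]).
   assert (0 <= Rabs Bv * X) by nra. nra. }
 assert (HErr3 : Rabs Err <= ell L b k0 / 2 * Rabs Bv * X).
 { eapply Rle_trans. apply HErr2. apply Rmult_le_compat_r. lra.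
   rewrite <- (Rmult_1_r (ell L b k0 / 2)) at 1. apply Rmult_le_compat_l; lra. }
 split; [|split].
 -
   set (Ld := Bv * (P * X * t)).
   assert (HA0 : 0 <= Bv * P * Ld).
   { unfold Ld. replace (Bv * P * (Bv * (P * X * t))) with ((Bv*P)^2 * (X*t)) by ring.
     apply Rmult_le_pos. apply pow2_ge_0. nra. }
   assert (HA : Bv * P * (Ld + Err) = Rabs (Bv * P) * Rabs Ld + Bv * P * Err).
   { rewrite <- Rabs_mult, Rabs_right by lra. ring. }
   rewrite HA.
   assert (Hbp : 0 < Rabs (Bv * P)) by (rewrite Rabs_mult; apply Rmult_lt_0_compat; auto; apply Rabs_pos_lt; auto).
   assert (Rabs (Bv * P * Err) <= Rabs (Bv * P) * (ell L b k0 / 2 * Rabs Bv * X)) by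
     (rewrite (Rabs_mult (Bv * P) Err); apply Rmult_le_compat_l; [lra|auto]).
   apply abs_le_inv in H1. fold Ld in HLead.
   assert (Rabs (Bv * P) * (Rabs Bv * ell L b k0 * X) <= Rabs (Bv * P) * Rabs Ld) by (apply Rmult_le_compat_l; lra).
   assert (0 < Rabs Bv * ell L b k0 * X) by (apply Rmult_lt_0_compat; [apply Rmult_lt_0_compat|]; lra).
   assert (0 < Rabs (Bv * P) * (Rabs Bv * ell L b k0 * X)) by (apply Rmult_lt_0_compat; lra).
   nra.
 - unfold lo. pose proof (Rabs_triang_inv (Bv * (P * X * t)) (- Err)). rewrite Rabs_Ropp in H1.
   replace (Bv * (P * X * t) - - Err) with (Bv * (P * X * t) + Err) in H1 by ring. nra.
 - unfold hi. fold P rh.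
   replace ((ell L b k0 / 2 + Rabs P * rh) * Rabs Bv * X) with (ell L b k0 / 2 * Rabs Bv * X + Rabs Bv * (Rabs P * rh) * X) by ring.
   pose proof (Rabs_triang (Bv * (P * X * t)) Err). lra.
Qed.

Lemma rsum_single f n j : (j < n)%nat -> (forall l, (l < n)%nat -> l <> j -> f l = 0) -> rsum f n = f j.
Proof. intros Hj H. rewrite (rsum_ext f (fun l => if Nat.eq_dec j l then f j else 0)).
 apply rsum_ind; auto. intros l Hl. destruct Nat.eq_dec. subst; auto. apply H; auto. Qed.

Lemma Bk_all_zero L h : (forall k, (k < L)%nat -> Bk L h k = 0) -> forall l, (l < L)%nat -> h l = 0%Z.
Proof. intros H.
 assert (Hd : forall d j, (L - d <= j < L)%nat -> IZR (h j) = 0).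
 { induction d; intros j Hj. lia.
   destruct (Nat.eq_dec j (L - S d)) as [->|Hne]; [|apply IHd; lia].
   pose proof (H (L - S d)%nat ltac:(lia)) as Hb. unfold Bk in Hb.
   rewrite (rsum_single _ _ (L - S d)%nat) in Hb. 2: lia.
   2:{ intros l Hl Hl'. destruct (Nat.lt_ge_cases l (L - S d)) as [Hlt|Hge].
       rewrite binom_big by lia; simpl; ring. rewrite IHd by lia; ring. }
   rewrite binom_diag in Hb. simpl in Hb. lra. }
 intros l Hl. apply eq_IZR. apply (Hd L). lia. Qed.

Lemma exists_min (P : nat -> Prop) n : (forall k, P k \/ ~ P k) -> (exists k, (k < n)%nat /\ P k) ->
  exists k, (k < n)%nat /\ P k /\ forall k', (k' < k)%nat -> ~ P k'.
Proof. intros Hdec. induction n; intros [k [Hk HP]]. lia.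
 destruct (classic (exists k, (k < n)%nat /\ P k)) as [Hex|Hnex].
 - destruct (IHn Hex) as [k' [H1 [H2 H3]]]. exists k'. split; [lia|auto].
 - exists k. split; auto. split; auto. intros k' Hk' HPk'. apply Hnex.
   destruct (Nat.eq_dec k n) as [Heq|Hne].
   + exists k'. split; [lia|auto].
   + exists k. split; [lia|auto]. Qed.

Lemma k0_exists L h : (exists l, (l < L)%nat /\ h l <> 0%Z) ->
  exists k0, (k0 < L)%nat /\ Bk L h k0 <> 0 /\ forall k, (k < k0)%nat -> Bk L h k = 0.
Proof. intros [l [Hl Hh]].
 assert (Hex : exists k, (k < L)%nat /\ Bk L h k <> 0).
 { apply NNPP. intros Hn. apply Hh. apply (Bk_all_zero L h); auto. intros k Hk.
   apply NNPP. intros Hk'. apply Hn. exists k; auto. }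
 destruct (exists_min (fun k => Bk L h k <> 0) L (fun k => classic _) Hex) as [k0 [H1 [H2 H3]]].
 exists k0. split; auto. split; auto. intros k Hk. apply NNPP. apply H3; auto. Qed.

Lemma Bk_int L h k : exists z, Bk L h k = IZR z.
Proof. induction L. exists 0%Z. reflexivity. destruct IHL as [z Hz].
 exists (z + h L * Z.of_nat (binom L k))%Z. unfold Bk in *. simpl. rewrite Hz.
 rewrite plus_IZR, mult_IZR, <- INR_IZR_INZ. auto. Qed.

Lemma Bk_ge1 L h k : Bk L h k <> 0 -> 1 <= Rabs (Bk L h k).
Proof. destruct (Bk_int L h k) as [z ->]. intros Hz. rewrite <- abs_IZR. apply IZR_le.
 assert (z <> 0%Z) by (intros ->; apply Hz; auto). lia. Qed.

Lemma fold_max_ge (g : nat -> R) a n : forall l, (a <= l < a + n)%nat ->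
  g l <= fold_right Rmax 0 (map g (seq a n)).
Proof. revert a. induction n; intros a l Hl. lia. simpl.
 destruct (Nat.eq_dec l a). subst. apply Rmax_l. eapply Rle_trans. 2: apply Rmax_r. apply IHn. lia. Qed.
Lemma fold_max_nonneg (g : nat -> R) a n : 0 <= fold_right Rmax 0 (map g (seq a n)).
Proof. revert a. induction n; intros; simpl. lra. eapply Rle_trans. 2: apply Rmax_r. auto. Qed.

Lemma hnorm_ge L h l : (l < L)%nat -> Rabs (IZR (h l)) <= hnorm L h.
Proof. intros. unfold hnorm. apply (fold_max_ge (fun l => Rabs (IZR (h l))) 0 L). lia. Qed.
Lemma hnorm_ge1 L h : (exists l, (l < L)%nat /\ h l <> 0%Z) -> 1 <= hnorm L h.
Proof. intros [l [Hl Hh]]. eapply Rle_trans. 2: apply (hnorm_ge L h l Hl).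
 rewrite <- abs_IZR. apply IZR_le. lia. Qed.

Lemma csum_shift f n : csum f (S n) = Cplus (f O) (csum (fun i => f (S i)) n).
Proof. induction n; simpl. ring. simpl in IHn. rewrite IHn. ring. Qed.
Lemma fold_csum (f : nat -> C) a n : fold_right Cplus (RtoC 0) (map f (seq a n)) = csum (fun i => f (a + i)%nat) n.
Proof. revert a. induction n; intros a; auto. simpl (seq a (S n)). simpl map. simpl fold_right.
 rewrite IHn, csum_shift. rewrite Nat.add_0_r. f_equal. apply csum_ext. intros. f_equal. lia. Qed.
Lemma fold_rsum (f : nat -> R) a n : fold_right Rplus 0 (map f (seq a n)) = rsum (fun i => f (a + i)%nat) n.
Proof. revert a. induction n; intros a; auto. simpl (seq a (S n)). simpl map. simpl fold_right.
 rewrite IHn, rsum_shift. rewrite Nat.add_0_r. f_equal. apply rsum_ext. intros. f_equal. lia. Qed.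

Definition Fam (c : R) (m L : nat) (h : nat -> Z) (j : nat) (x : R) : R :=
  / INR m * Pk c j * Gb L h (c - INR j) x.

Lemma expsum_S c m L h N : expsum c m L h N = S_ (fun n => Fam c m L h 0 (INR n)) N N.
Proof. unfold expsum, csum_N_2N, S_. rewrite fold_csum. apply csum_ext. intros i Hi. f_equal.
 unfold rsum_lt, Fam, Gb. rewrite fold_rsum. simpl Pk. simpl INR. rewrite Rminus_0_r, Rmult_1_r. f_equal.
 apply rsum_ext. intros l Hl. simpl. rewrite plus_INR. auto. Qed.

Lemma Gb_deriv L h b x : 0 < x -> derivable_pt_lim (Gb L h b) x (b * Gb L h (b - 1) x).
Proof. intros Hx. unfold Gb. rewrite <- rsum_scal.
 apply (dpl_rsum (fun l y => IZR (h l) * Rpower (y + INR l) b)). intros l Hl.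
 replace (b * (IZR (h l) * Rpower (x + INR l) (b - 1))) with (IZR (h l) * (b * Rpower (x + INR l) (b - 1))) by ring.
 apply dpl_scal. apply (dpl_shift (fun y => Rpower y b)). apply derivable_pt_lim_power.
 pose proof (pos_INR l); lra. Qed.

Lemma Fam_deriv c m L h j x : 0 < x -> derivable_pt_lim (Fam c m L h j) x (Fam c m L h (S j) x).
Proof. intros Hx. unfold Fam. apply (dpl_ext (fun y => / INR m * Pk c j * Gb L h (c - INR j) y)). auto.
 replace (/ INR m * Pk c (S j) * Gb L h (c - INR (S j)) x) with
   (/ INR m * Pk c j * ((c - INR j) * Gb L h (c - INR j - 1) x)).
 apply dpl_scal. apply Gb_deriv; auto.
 simpl Pk. rewrite S_INR. replace (c - (INR j + 1)) with (c - INR j - 1) by ring. ring. Qed.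

Lemma dlts_ext rs : forall th1 th2, (forall n, th1 n = th2 n) -> forall n, dlts rs th1 n = dlts rs th2 n.
Proof. induction rs; simpl; intros th1 th2 H n; auto. apply IHrs. intros; unfold dlt; rewrite !H; auto. Qed.
Lemma dlts_rdlts rs : forall F n, dlts rs (fun k => F (INR k)) n = rdlts rs F (INR n).
Proof. induction rs as [|r rs IH]; intros F n; simpl; auto.
 rewrite (dlts_ext rs (dlt r (fun k => F (INR k))) (fun k => rdlt r F (INR k))).
 apply IH. intros k. unfold dlt, rdlt. rewrite plus_INR. auto. Qed.
Lemma dlts_app rs : forall rs' th n, dlts (rs ++ rs') th n = dlts rs' (dlts rs th) n.
Proof. induction rs; simpl; intros; auto. Qed.
Lemma prodr_app rs rs' : prodr (rs ++ rs') = prodr rs * prodr rs'.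
Proof. induction rs; unfold prodr in *; simpl. ring. rewrite IHrs. ring. Qed.
Lemma sumr_app rs rs' : sumr (rs ++ rs') = sumr rs + sumr rs'.
Proof. induction rs; unfold sumr in *; simpl. ring. rewrite IHrs. ring. Qed.

Lemma okrs_prop rs : forall T, 1 <= T -> okrs T rs ->
  1 <= prodr rs /\ prodr rs <= T ^ (2 ^ S (length rs) - 2) /\ sumr rs <= INR (length rs) * T ^ (2 ^ length rs).
Proof. induction rs as [|r rs IH]; intros T HT Hok.
 - simpl. unfold prodr, sumr; simpl. lra.
 - destruct Hok as [Hr1 [Hr2 Hok]].
   assert (HT2 : 1 <= T^2) by nra.
   destruct (IH (T^2) HT2 Hok) as [H1 [H2 H3]].
   assert (E1 : prodr (r :: rs) = INR r * prodr rs) by reflexivity.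
   assert (E2 : sumr (r :: rs) = INR r + sumr rs) by reflexivity.
   rewrite E1, E2. simpl length. set (l := length rs) in *.
   rewrite <- !pow_mult in H2, H3.
   assert (HINR : 1 <= INR r) by (apply (le_INR 1); auto).
   split; [|split].
   + nra.
   + replace (2 ^ S (S l) - 2)%nat with (2 + (2 * (2 ^ S l - 2)))%nat by (simpl; pose proof (Nat.pow_nonzero 2 l); lia).
     rewrite pow_add. apply Rmult_le_compat; lra.
   + rewrite S_INR. replace (2 * 2 ^ l)%nat with (2 ^ S l)%nat in H3 by (simpl; lia).
     assert (T ^ 2 <= T ^ (2 ^ S l)) by (apply Rle_pow; auto; simpl; pose proof (Nat.pow_nonzero 2 l); lia).
     pose proof (pos_INR l). nra. Qed.

Lemma base_KL (F : nat -> R -> R) (Hd : forall j y, 0 < y -> derivable_pt_lim (F j) y (F (S j) y))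
  (p : nat) (rs : list nat) (a' N' : nat) (lam Lam xmax : R) :
  length rs = p -> 1 <= INR a' -> 1 <= prodr rs -> prodr rs * Lam <= / 2 -> 0 < lam <= / 2 ->
  INR a' + INR N' + sumr rs <= xmax ->
  ((forall xi, INR a' <= xi <= xmax -> lam <= F (S p) xi <= Lam) \/
   (forall xi, INR a' <= xi <= xmax -> lam <= - F (S p) xi <= Lam)) ->
  ((forall xi, INR a' <= xi <= xmax -> 0 <= F (S (S p)) xi) \/
   (forall xi, INR a' <= xi <= xmax -> F (S (S p)) xi <= 0)) ->
  Cmod (S_ (dlts rs (fun n => F 0%nat (INR n))) a' N') <= 4 / lam.
Proof.
 intros Hlen Ha Hp1 HpL Hlam Hx Hs1 Hs2.
 set (th := fun n => F 0%nat (INR n)).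
 set (phi := dlts rs th).
 assert (Hsum : 0 <= sumr rs) by (pose proof (okrs_prop rs 1 ltac:(lra)); induction rs; unfold sumr; simpl;
   [lra| pose proof (pos_INR a); fold (sumr rs); apply Rplus_le_le_0_compat; auto; clear -rs; induction rs; unfold sumr in *; simpl; [lra| pose proof (pos_INR a); lra]]).
 assert (Hg : forall n, INR a' <= INR n -> INR n + 1 + sumr rs <= xmax ->
   exists xi, INR a' <= xi <= xmax /\ phi (S n) - phi n = prodr rs * F (S p) xi).
 { intros n Hn1 Hn2.
   assert (E : phi (S n) - phi n = dlts (rs ++ [1%nat]) th n).
   { rewrite dlts_app. simpl. unfold dlt. rewrite Nat.add_1_r. auto. }
   rewrite E. unfold th. rewrite dlts_rdlts.
   destruct (MVTit (rs ++ [1%nat]) F (INR n) Hd ltac:(lra)) as [xi [Hxi Heq]].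
   rewrite sumr_app in Hxi. assert (sumr [1%nat] = 1) by (unfold sumr; simpl; ring).
   exists xi. split. lra. rewrite Heq, prodr_app, app_length, Hlen. simpl length.
   replace (p + 1)%nat with (S p) by lia. unfold prodr at 2. simpl. ring. }
 assert (Hg2 : forall n, INR a' <= INR n -> INR n + 2 + sumr rs <= xmax ->
   exists xi, INR a' <= xi <= xmax /\ (phi (S (S n)) - phi (S n)) - (phi (S n) - phi n) = prodr rs * F (S (S p)) xi).
 { intros n Hn1 Hn2.
   assert (E : (phi (S (S n)) - phi (S n)) - (phi (S n) - phi n) = dlts (rs ++ [1%nat; 1%nat]) th n).
   { rewrite dlts_app. simpl. unfold dlt. replace (n + 1 + 1)%nat with (S (S n)) by lia.
     rewrite Nat.add_1_r. auto. }
   rewrite E. unfold th. rewrite dlts_rdlts.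
   destruct (MVTit (rs ++ [1%nat; 1%nat]) F (INR n) Hd ltac:(lra)) as [xi [Hxi Heq]].
   rewrite sumr_app in Hxi. assert (sumr [1%nat; 1%nat] = 2) by (unfold sumr; simpl; ring).
   exists xi. split. lra. rewrite Heq, prodr_app, app_length, Hlen. simpl length.
   replace (p + 2)%nat with (S (S p)) by lia. unfold prodr at 2. simpl. ring. }
 assert (HaI : forall i, INR a' <= INR (a' + i)) by (intros; apply le_INR; lia).
 assert (HiN : forall i k, (i + k < N')%nat -> INR (a' + i) + INR k + 1 <= INR a' + INR N').
 { intros i k Hik. rewrite <- plus_INR. replace (INR (a' + i + k) + 1) with (INR (S (a' + i + k))) by (rewrite S_INR; ring).
   rewrite <- plus_INR. apply le_INR. lia. }
 assert (Hmono : forall s : R, (s = 0 \/ s = 1) ->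
   (forall i, (S (S i) < N')%nat ->
      phi (a' + S i)%nat + s * INR (a' + S i) - (phi (a' + i)%nat + s * INR (a' + i)) <=
      phi (a' + S (S i))%nat + s * INR (a' + S (S i)) - (phi (a' + S i)%nat + s * INR (a' + S i))) \/
   (forall i, (S (S i) < N')%nat ->
      phi (a' + S (S i))%nat + s * INR (a' + S (S i)) - (phi (a' + S i)%nat + s * INR (a' + S i)) <=
      phi (a' + S i)%nat + s * INR (a' + S i) - (phi (a' + i)%nat + s * INR (a' + i)))).
 { intros s Hs. destruct Hs2 as [Hs2|Hs2]; [left|right]; intros i Hi;
   destruct (Hg2 (a' + i)%nat (HaI i) ltac:(pose proof (HiN i 1%nat ltac:(lia)); simpl INR in *; lra)) as [xi [Hxi E]];
   rewrite !Nat.add_succ_r, !S_INR; specialize (Hs2 xi Hxi); nra. }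
 destruct Hs1 as [Hs1|Hs1].
 - apply KL. auto.
   + intros i Hi. rewrite Nat.add_succ_r.
     destruct (Hg (a' + i)%nat (HaI i) ltac:(pose proof (HiN i 0%nat ltac:(lia)); simpl INR in *; lra)) as [xi [Hxi E]].
     rewrite E. specialize (Hs1 xi Hxi). split; nra.
   + destruct (Hmono 0 ltac:(lra)) as [Hm|Hm]; [left|right]; intros i Hi; specialize (Hm i Hi); lra.
 - assert (ES : S_ phi a' N' = S_ (fun n => phi n + 1 * INR n) a' N').
   { unfold S_. apply csum_ext. intros. rewrite Rmult_1_l, e_shift_nat. auto. }
   rewrite ES. apply KL. auto.
   + intros i Hi. rewrite Nat.add_succ_r.
     destruct (Hg (a' + i)%nat (HaI i) ltac:(pose proof (HiN i 0%nat ltac:(lia)); simpl INR in *; lra)) as [xi [Hxi E]].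
     rewrite S_INR. replace (phi (S (a' + i)) + 1 * (INR (a' + i) + 1) - (phi (a' + i)%nat + 1 * INR (a' + i)))
       with (phi (S (a' + i)) - phi (a' + i)%nat + 1) by ring.
     rewrite E. specialize (Hs1 xi Hxi). split; nra.
   + destruct (Hmono 1 ltac:(lra)) as [Hm|Hm]; [left|right]; intros i Hi; specialize (Hm i Hi); lra.
Qed.

Lemma frac_facts c : 1 < c -> (forall z, c <> IZR z) ->
  INR (Z.to_nat (rfloor c)) = c - fracp c /\ 0 < fracp c < 1 /\ (1 <= Z.to_nat (rfloor c))%nat.
Proof. intros Hc Hz. unfold fracp, rfloor. destruct (base_Int_part c) as [H1 H2].
 assert (H3 : IZR (Int_part c) < c) by (destruct H1; auto; exfalso; apply (Hz (Int_part c)); auto).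
 assert (Hp : (1 <= Int_part c)%Z). { apply le_IZR. apply Rnot_lt_le. intros Hlt.
   assert (IZR (Int_part c) <= 0). { apply IZR_le. apply lt_IZR in Hlt. lia. } lra. }
 rewrite INR_IZR_INZ, Z2Nat.id by lia. split. ring. split. lra. lia. Qed.

Lemma Pk_nz c j k : (forall z, c <> IZR z) -> Pk (c - INR j) k <> 0.
Proof. intros Hz. induction k; simpl. lra. apply Rmult_integral_contrapositive. split; auto.
 intros H. apply (Hz (Z.of_nat (j + k))). rewrite <- INR_IZR_INZ, plus_INR. lra. Qed.

Lemma Rpower_decr_base x y e0 : 0 < x <= y -> e0 <= 0 -> Rpower y e0 <= Rpower x e0.
Proof. intros. replace e0 with (- (- e0)) by ring. rewrite (Rpower_Ropp y (- e0)), (Rpower_Ropp x (- e0)).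
 apply Rinv_le_contravar. apply exp_pos. apply Rle_Rpower_l; lra. Qed.

Lemma sign_lemma v u : 0 < v * u -> (0 < v -> 0 < u) /\ (v < 0 -> u < 0).
Proof. intros H. destruct (Rtotal_order u 0) as [Hu|[Hu|Hu]].
 - split; intros; auto. exfalso. pose proof (Rmult_pos_neg v u H0 Hu). lra.
 - subst. rewrite Rmult_0_r in H. lra.
 - split; intros; auto. exfalso. pose proof (Rmult_neg_pos v u H0 Hu). lra. Qed.

Lemma Rpower_pos x y : 0 < Rpower x y.
Proof. apply exp_pos. Qed.

Lemma setup c m k0 : 1 < c -> (forall z, c <> IZR z) -> (0 < m)%nat ->
  (k0 < Z.to_nat (rfloor c) + 1)%nat ->
  exists klo khi d0, 0 < klo /\ 0 < khi /\ 0 < d0 /\ klo <= khi /\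
  forall N h, (0 < N)%nat -> (exists l, (l < Z.to_nat (rfloor c) + 1)%nat /\ h l <> 0%Z) ->
   Bk (Z.to_nat (rfloor c) + 1) h k0 <> 0 ->
   (forall k, (k < k0)%nat -> Bk (Z.to_nat (rfloor c) + 1) h k = 0) ->
   hnorm (Z.to_nat (rfloor c) + 1) h <= d0 * Rpower (INR N) (1 - fracp c) ->
   khi * hnorm (Z.to_nat (rfloor c) + 1) h * Rpower (INR N) (fracp c - 1) <= / 4 /\
   forall T, 1 <= T -> T ^ (2 ^ (Z.to_nat (rfloor c) - k0)) <= INR N ->
     T ^ (2 ^ S (Z.to_nat (rfloor c) - k0) - 2) * (khi * hnorm (Z.to_nat (rfloor c) + 1) h * Rpower (INR N) (fracp c - 1)) <= / 2 ->
     Cmod (expsum c m (Z.to_nat (rfloor c) + 1) h N) <=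
       U (Z.to_nat (rfloor c) - k0) (INR N) T (4 / (klo * Rpower (INR N) (fracp c - 1))).
Proof.
 intros Hc Hz Hm Hk0.
 destruct (frac_facts c Hc Hz) as [HK [Hfc HK1]].
 set (K := Z.to_nat (rfloor c)) in *. set (fc := fracp c) in *. set (L := (K + 1)%nat) in *.
 set (p := (K - k0)%nat). set (q := S p).
 assert (Hq : INR q + INR k0 = INR K + 1) by (rewrite <- plus_INR, <- S_INR; f_equal; unfold q, p; lia).
 set (b1 := c - INR q). set (b2 := c - INR (S q)).
 assert (Hb1 : b1 - INR k0 = fc - 1) by (unfold b1; lra).
 assert (Hb2 : b2 - INR k0 = fc - 2) by (unfold b2; rewrite S_INR; lra).
 assert (HP1 : Pk b1 k0 <> 0) by (apply Pk_nz; auto).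
 assert (HP2 : Pk b2 k0 <> 0) by (apply Pk_nz; auto).
 assert (HPq : Pk c q <> 0) by (pose proof (Pk_nz c 0 q Hz) as HH; simpl INR in HH; rewrite Rminus_0_r in HH; auto).
 assert (HmR : 0 < INR m) by (apply (lt_INR 0); auto).
 set (A1 := / INR m * Rabs (Pk c q)).
 assert (HA1 : 0 < A1) by (apply Rmult_lt_0_compat; [apply Rinv_0_lt_compat; auto| apply Rabs_pos_lt; auto]).
 assert (HkL : (k0 < L)%nat) by auto.
 pose proof (ell_pos L b1 k0 HP1) as Hell1.
 assert (Hlo : 0 < lo L b1 k0) by (unfold lo; lra).
 assert (Hlohi : lo L b1 k0 <= hi L b1 k0).
 { unfold hi, lo. pose proof (Rabs_pos (Pk b1 k0)). pose proof (rho_pos L (b1 - INR k0)). nra. }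
 pose proof (beta_k0 L k0 HkL) as Hbeta.
 set (klo := A1 * lo L b1 k0 * Rpower (INR L + 4) (fc - 1)).
 set (khi := A1 * hi L b1 k0 * beta L k0).
 assert (Hklo : 0 < klo) by (apply Rmult_lt_0_compat; [apply Rmult_lt_0_compat; auto| apply Rpower_pos]).
 assert (Hkhi : 0 < khi) by (apply Rmult_lt_0_compat; [apply Rmult_lt_0_compat; lra| lra]).
 pose proof (dl_pos L b1 k0 HkL HP1) as Hdl1. pose proof (dl_pos L b2 k0 HkL HP2) as Hdl2.
 set (d0 := Rmin (Rmin (dl L b1 k0) (dl L b2 k0)) (/ (4 * khi))).
 assert (Hd0 : 0 < d0) by (unfold d0; repeat apply Rmin_glb_lt; auto; apply Rinv_0_lt_compat; lra).
 assert (Hkk : klo <= khi).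
 { unfold klo, khi. assert (Rpower (INR L + 4) (fc - 1) <= 1).
   { replace 1 with (Rpower 1 (fc - 1)) at 2 by (unfold Rpower; rewrite ln_1, Rmult_0_r, exp_0; auto).
     apply Rpower_decr_base. pose proof (pos_INR L); lra. lra. }
   pose proof (Rpower_pos (INR L + 4) (fc - 1)).
   apply Rmult_le_compat. apply Rmult_le_pos; lra. lra. apply Rmult_le_compat_l; lra. lra. }
 exists klo, khi, d0. split; auto. split; auto. split; auto. split; auto.
 intros N h HN Hh HBk HBz HH.
 set (H := hnorm L h) in *.
 pose proof (hnorm_ge1 L h Hh) as H1. fold H in H1.
 assert (HNR : 1 <= INR N) by (apply (le_INR 1); lia).
 assert (HNfc : Rpower (INR N) (1 - fc) <= INR N) by (rewrite <- (Rpower_1 (INR N)) at 2 by lra; apply Rle_Rpower; lra).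
 assert (HNN : Rpower (INR N) (1 - fc) * Rpower (INR N) (fc - 1) = 1).
 { rewrite <- Rpower_plus. replace (1 - fc + (fc - 1)) with 0 by ring. apply Rpower_O. lra. }
 assert (Hd0x : forall x, INR N <= x -> H <= dl L b1 k0 * x /\ H <= dl L b2 k0 * x).
 { intros x Hx. assert (H <= d0 * INR N).
   { eapply Rle_trans. apply HH. apply Rmult_le_compat_l; lra. }
   assert (d0 <= dl L b1 k0) by (unfold d0; eapply Rle_trans; [apply Rmin_l| apply Rmin_l]).
   assert (d0 <= dl L b2 k0) by (unfold d0; eapply Rle_trans; [apply Rmin_l| apply Rmin_r]).
   split; nra. }
 set (Lam := khi * H * Rpower (INR N) (fc - 1)).
 set (lam := klo * Rpower (INR N) (fc - 1)).
 assert (HLam : Lam <= / 4).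
 { unfold Lam. assert (d0 <= / (4 * khi)) by (unfold d0; apply Rmin_r).
   pose proof (Rpower_pos (INR N) (fc - 1)).
   apply Rle_trans with (khi * (d0 * Rpower (INR N) (1 - fc)) * Rpower (INR N) (fc - 1)).
   apply Rmult_le_compat_r. lra. apply Rmult_le_compat_l; lra.
   replace (khi * (d0 * Rpower (INR N) (1 - fc)) * Rpower (INR N) (fc - 1)) with (khi * d0 * (Rpower (INR N) (1 - fc) * Rpower (INR N) (fc - 1))) by ring.
   rewrite HNN, Rmult_1_r. apply Rmult_le_reg_l with (/khi). apply Rinv_0_lt_compat; lra.
   replace (/ khi * (khi * d0)) with d0 by (field; lra). replace (/ khi * / 4) with (/ (4 * khi)) by (field; lra). auto. }
 split. exact HLam.
 intros T HT HTN HTL.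
 set (xmax := (INR L + 4) * INR N).
 assert (HLR : INR L = INR K + 1) by (unfold L; rewrite plus_INR; simpl; ring).
 assert (HF : forall x, INR N <= x <= xmax ->
    0 < (Pk c q * (Bk L h k0 * Pk b1 k0)) * Fam c m L h q x /\ lam <= Rabs (Fam c m L h q x) <= Lam).
 { intros x Hx. destruct (Hd0x x ltac:(lra)) as [Hx1 _].
   destruct (lead L h b1 k0 H x HkL HBz (Bk_ge1 L h k0 HBk) (fun l Hl => hnorm_ge L h l Hl) HP1 ltac:(lra) Hx1)
     as [Hs [Hl Hu]].
   rewrite Hb1 in Hl, Hu. unfold Fam. fold b1.
   pose proof (Bk_ge1 L h k0 HBk) as HB1. pose proof (Bk_bound L h H k0 (fun l Hl => hnorm_ge L h l Hl)) as HB2.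
   split.
   - replace (Pk c q * (Bk L h k0 * Pk b1 k0) * (/ INR m * Pk c q * Gb L h b1 x)) with
       (/ INR m * (Pk c q * Pk c q) * (Bk L h k0 * Pk b1 k0 * Gb L h b1 x)) by ring.
     apply Rmult_lt_0_compat; auto. apply Rmult_lt_0_compat. apply Rinv_0_lt_compat; auto.
     assert (0 < Rabs (Pk c q)) by (apply Rabs_pos_lt; auto).
     replace (Pk c q * Pk c q) with (Rabs (Pk c q) * Rabs (Pk c q)) by
       (rewrite <- Rabs_mult; apply Rabs_right; nra). nra.
   - rewrite Rabs_mult, Rabs_mult, Rabs_inv, (Rabs_right (INR m)) by lra. fold A1.
     replace (/ INR m * Rabs (Pk c q)) with A1 by reflexivity.
     assert (Hxp : 0 < x) by lra.
     assert (Hxm : Rpower xmax (fc - 1) <= Rpower x (fc - 1)) by (apply Rpower_decr_base; lra).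
     assert (Hxn : Rpower x (fc - 1) <= Rpower (INR N) (fc - 1)) by (apply Rpower_decr_base; lra).
     assert (Hxmax : Rpower xmax (fc - 1) = Rpower (INR L + 4) (fc - 1) * Rpower (INR N) (fc - 1)).
     { unfold xmax. rewrite Rpower_mult_distr; auto. pose proof (pos_INR L); lra. lra. }
     pose proof (Rpower_pos x (fc - 1)). pose proof (Rpower_pos (INR N) (fc - 1)).
     pose proof (Rpower_pos (INR L + 4) (fc - 1)).
     split.
     + unfold lam, klo. apply Rle_trans with (A1 * (lo L b1 k0 * Rabs (Bk L h k0) * Rpower x (fc - 1))).
       2: apply Rmult_le_compat_l; lra.
       rewrite Hxmax in Hxm.
       apply Rle_trans with (A1 * (lo L b1 k0 * 1 * (Rpower (INR L + 4) (fc - 1) * Rpower (INR N) (fc - 1)))).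
       right; ring. apply Rmult_le_compat_l. lra. apply Rmult_le_compat. nra.
       nra. apply Rmult_le_compat_l; lra. auto.
     + unfold Lam, khi. apply Rle_trans with (A1 * (hi L b1 k0 * Rabs (Bk L h k0) * Rpower x (fc - 1))).
       apply Rmult_le_compat_l; lra.
       apply Rle_trans with (A1 * (hi L b1 k0 * (H * beta L k0) * Rpower (INR N) (fc - 1))).
       apply Rmult_le_compat_l. lra. apply Rmult_le_compat. pose proof (Rabs_pos (Bk L h k0)); nra. lra.
       apply Rmult_le_compat_l. lra. auto. auto. right; ring. }
 assert (HF2 : forall x, INR N <= x <= xmax -> 0 < (Pk c (S q) * (Bk L h k0 * Pk b2 k0)) * Fam c m L h (S q) x).
 { intros x Hx. destruct (Hd0x x ltac:(lra)) as [_ Hx2].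
   destruct (lead L h b2 k0 H x HkL HBz (Bk_ge1 L h k0 HBk) (fun l Hl => hnorm_ge L h l Hl) HP2 ltac:(lra) Hx2)
     as [Hs _].
   unfold Fam. fold b2.
   replace (Pk c (S q) * (Bk L h k0 * Pk b2 k0) * (/ INR m * Pk c (S q) * Gb L h b2 x)) with
       (/ INR m * (Pk c (S q) * Pk c (S q)) * (Bk L h k0 * Pk b2 k0 * Gb L h b2 x)) by ring.
   assert (HPq2 : Pk c (S q) <> 0) by (pose proof (Pk_nz c 0 (S q) Hz) as HH2; simpl INR in HH2; rewrite Rminus_0_r in HH2; auto).
   apply Rmult_lt_0_compat; auto. apply Rmult_lt_0_compat. apply Rinv_0_lt_compat; auto.
   assert (0 < Rabs (Pk c (S q))) by (apply Rabs_pos_lt; auto). 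
   replace (Pk c (S q) * Pk c (S q)) with (Rabs (Pk c (S q)) * Rabs (Pk c (S q))) by
     (rewrite <- Rabs_mult; apply Rabs_right; nra). nra. }
 assert (Hlam : 0 < lam <= / 2).
 { split. unfold lam. apply Rmult_lt_0_compat; auto. apply Rpower_pos.
   destruct (HF (INR N) ltac:(unfold xmax; pose proof (pos_INR L); nra)) as [_ [Hl Hu]]. lra. }
 rewrite expsum_S. fold L.
 apply claim. auto. unfold Rdiv. apply Rmult_le_pos. lra. left; apply Rinv_0_lt_compat; lra.
 intros rs Hlen Hok a' N' Ha' HN'.
 destruct (okrs_prop rs T HT Hok) as [Hp1 [Hp2 Hp3]].
 rewrite Hlen in Hp2, Hp3.
 apply (base_KL (Fam c m L h) (Fam_deriv c m L h) p rs a' N' lam Lam xmax Hlen).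
 - apply (le_INR 1). lia.
 - auto.
 - apply Rle_trans with (T ^ (2 ^ S p - 2) * Lam). apply Rmult_le_compat_r. unfold Lam.
   pose proof (Rpower_pos (INR N) (fc - 1)). apply Rmult_le_pos; [apply Rmult_le_pos|]; lra. auto. auto.
 - auto.
 - assert (INR a' + INR N' <= 2 * INR N) by (rewrite <- plus_INR; replace (2 * INR N) with (INR (N + N)) by (rewrite plus_INR; ring); apply le_INR; lia).
   assert (INR p <= INR L) by (apply le_INR; unfold p, L; lia).
   assert (INR p * T ^ (2 ^ p) <= INR L * INR N).
   { apply Rmult_le_compat; auto. apply pos_INR. apply pow_le; lra. }
   unfold xmax. lra.
 - assert (HaN : INR N <= INR a') by (apply le_INR; lia).
   assert (Hs1 : Pk c q * (Bk L h k0 * Pk b1 k0) <> 0) by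
     (repeat apply Rmult_integral_contrapositive; repeat split; auto).
   destruct (Rlt_or_le 0 (Pk c q * (Bk L h k0 * Pk b1 k0))) as [Hpos|Hneg].
   + left. intros xi Hxi. destruct (HF xi ltac:(lra)) as [Hs [Hl Hu]].
     assert (0 < Fam c m L h q xi) by (apply (proj1 (sign_lemma _ _ Hs)); lra). rewrite Rabs_right in Hl, Hu by lra. split; auto.
   + right. intros xi Hxi. destruct (HF xi ltac:(lra)) as [Hs [Hl Hu]].
     assert (Fam c m L h q xi < 0) by (apply (proj2 (sign_lemma _ _ Hs)); lra).
     rewrite Rabs_left in Hl, Hu by lra. split; auto.
 - assert (HaN : INR N <= INR a') by (apply le_INR; lia).
   destruct (Rlt_or_le 0 (Pk c (S q) * (Bk L h k0 * Pk b2 k0))) as [Hpos|Hneg].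
   + left. intros xi Hxi. pose proof (HF2 xi ltac:(lra)) as HH2. change (0 <= Fam c m L h (S q) xi).
     set (u := Fam c m L h (S q) xi) in *. set (v := Pk c (S q) * (Bk L h k0 * Pk b2 k0)) in *.
     destruct (Rle_or_lt 0 u); auto. assert (v * u < 0) by (apply Rmult_pos_neg; auto). lra.
   + right. intros xi Hxi. pose proof (HF2 xi ltac:(lra)) as HH2. change (Fam c m L h (S q) xi <= 0).
     set (u := Fam c m L h (S q) xi) in *. set (v := Pk c (S q) * (Bk L h k0 * Pk b2 k0)) in *.
     destruct Hneg as [Hneg|Heq]. destruct (Rle_or_lt u 0); auto.
     assert (v * u < 0) by (rewrite Rmult_comm; apply Rmult_pos_neg; auto). lra.
     rewrite Heq in HH2. lra.
Qed.

Lemma Rpower_mono_e x a b0 : 1 <= x -> a <= b0 -> Rpower x a <= Rpower x b0.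
Proof. intros; apply Rle_Rpower; auto. Qed.

Lemma pow_Rpower x n : 0 < x -> x ^ n = Rpower x (INR n).
Proof. intros; rewrite Rpower_pow; auto. Qed.

Lemma eps_facts c k0 : 1 < c -> (forall z, c <> IZR z) -> (k0 < Z.to_nat (rfloor c) + 1)%nat ->
  let p := (Z.to_nat (rfloor c) - k0)%nat in
  let eps := dist_int c / Rpower 2 (c + 1) in
  0 < eps /\ eps <= fracp c /\ eps <= / 2 ^ S p /\ eps <= fracp c / 2 ^ p /\
  ((1 <= p)%nat -> eps <= (1 - fracp c) / (2 ^ S p - 2)).
Proof. intros Hc Hz Hk0 p eps.
 destruct (frac_facts c Hc Hz) as [HK [Hfc HK1]].
 set (K := Z.to_nat (rfloor c)) in *. set (fc := fracp c) in *.
 assert (HD : 0 < dist_int c /\ dist_int c <= fc /\ dist_int c <= 1 - fc).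
 { unfold dist_int. fold fc. split. apply Rmin_glb_lt; lra. split. apply Rmin_l. apply Rmin_r. }
 assert (HP2 : 2 ^ S p <= Rpower 2 (c + 1)).
 { rewrite pow_Rpower by lra. apply Rle_Rpower. lra. rewrite S_INR.
   assert (INR p <= INR K) by (apply le_INR; unfold p; lia). lra. }
 assert (H2p : 2 <= 2 ^ S p) by (simpl; pose proof (pow_R1_Rle 2 p ltac:(lra)); lra).
 assert (H2p' : 2 ^ p <= 2 ^ S p) by (simpl; pose proof (pow_R1_Rle 2 p ltac:(lra)); lra).
 assert (H1p : 1 <= 2 ^ p) by (apply pow_R1_Rle; lra).
 assert (HP0 : 0 < Rpower 2 (c + 1)) by apply exp_pos.
 unfold eps. split; [|split; [|split; [|split]]].
 - apply Rdiv_lt_0_compat; lra.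
 - apply Rle_trans with (dist_int c / 1). unfold Rdiv. apply Rmult_le_compat_l. lra.
   apply Rinv_le_contravar; lra. unfold Rdiv; rewrite Rinv_1; lra.
 - apply Rle_trans with (1 / 2 ^ S p). unfold Rdiv. apply Rmult_le_compat. lra.
   left; apply Rinv_0_lt_compat; lra. lra. apply Rinv_le_contravar; lra. unfold Rdiv; lra.
 - unfold Rdiv. apply Rmult_le_compat. lra. left; apply Rinv_0_lt_compat; lra. lra.
   apply Rinv_le_contravar; lra.
 - intros Hp. assert (4 <= 2 ^ S p). { simpl. assert (2 <= 2 ^ p) by (destruct p; [lia|simpl; pose proof (pow_R1_Rle 2 p ltac:(lra)); lra]). lra. }
   unfold Rdiv. apply Rmult_le_compat. lra. left; apply Rinv_0_lt_compat; lra. lra.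
   apply Rinv_le_contravar; lra. Qed.

Lemma Rpower_mul x y e0 : 0 < x -> 0 < y -> Rpower (x * y) e0 = Rpower x e0 * Rpower y e0.
Proof. intros. rewrite Rpower_mult_distr; auto. Qed.
Lemma Rpower_xmul x a : 0 < x -> x * Rpower x a = Rpower x (1 + a).
Proof. intros. rewrite Rpower_plus, Rpower_1; auto. Qed.

Lemma main_k0 c m k0 : 1 < c -> (forall z, c <> IZR z) -> (0 < m)%nat ->
  (k0 < Z.to_nat (rfloor c) + 1)%nat ->
  exists C0 delta, 0 < C0 /\ 0 < delta /\
  forall N h, (0 < N)%nat -> (exists l, (l < Z.to_nat (rfloor c) + 1)%nat /\ h l <> 0%Z) ->
   Bk (Z.to_nat (rfloor c) + 1) h k0 <> 0 ->
   (forall k, (k < k0)%nat -> Bk (Z.to_nat (rfloor c) + 1) h k = 0) ->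
   hnorm (Z.to_nat (rfloor c) + 1) h <= delta * Rpower (INR N) (1 - fracp c) ->
   Cmod (expsum c m (Z.to_nat (rfloor c) + 1) h N) <=
     C0 * hnorm (Z.to_nat (rfloor c) + 1) h * Rpower (INR N) (1 - dist_int c / Rpower 2 (c + 1)).
Proof.
 intros Hc Hz Hm Hk0.
 destruct (setup c m k0 Hc Hz Hm Hk0) as [klo [khi [d0 [Hklo [Hkhi [Hd0 [Hkk Hmain]]]]]]].
 destruct (eps_facts c k0 Hc Hz Hk0) as [He0 [He1 [He2 [He3 He4]]]].
 destruct (frac_facts c Hc Hz) as [HK [Hfc HK1]].
 set (K := Z.to_nat (rfloor c)) in *. set (fc := fracp c) in *. set (L := (K + 1)%nat) in *.
 set (p := (K - k0)%nat) in *. set (eps := dist_int c / Rpower 2 (c + 1)) in *.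
 destruct (Nat.eq_dec p 0) as [Hp0|Hp1].
 - exists (4 / klo), d0. split. apply Rdiv_lt_0_compat; lra. split; auto.
   intros N h HN Hh HBk HBz HH.
   destruct (Hmain N h HN Hh HBk HBz HH) as [HLam Hb].
   set (H := hnorm L h) in *. pose proof (hnorm_ge1 L h Hh) as H1. fold H in H1.
   assert (HNR : 1 <= INR N) by (apply (le_INR 1); lia).
   assert (HLam0 : 0 <= khi * H * Rpower (INR N) (fc - 1)) by (pose proof (exp_pos ((fc - 1) * ln (INR N))); unfold Rpower; apply Rmult_le_pos; [apply Rmult_le_pos|]; lra).
   specialize (Hb 1 ltac:(lra) ltac:(rewrite pow1; lra) ltac:(rewrite pow1; lra)).
   rewrite Hp0 in Hb. cbn [U] in Hb.
   eapply Rle_trans. apply Hb.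
   assert (E : 4 / (klo * Rpower (INR N) (fc - 1)) = 4 / klo * Rpower (INR N) (1 - fc)).
   { replace (1 - fc) with (- (fc - 1)) by ring. rewrite Rpower_Ropp. field. split. pose proof (exp_pos ((fc - 1) * ln (INR N))); unfold Rpower; lra. lra. }
   rewrite E. rewrite Rmult_assoc. apply Rmult_le_compat_l. left; apply Rdiv_lt_0_compat; lra.
   rewrite <- (Rmult_1_l (Rpower (INR N) (1 - fc))). apply Rmult_le_compat; try lra.
   left; apply exp_pos. apply Rle_Rpower; lra.
 - destruct (U_bound p) as [Kp [HKp HU]].
   set (s := / (2 ^ S p - 2)). set (w := / 2 ^ p).
   assert (H4p : 4 <= 2 ^ S p). { simpl. assert (2 <= 2 ^ p) by (destruct p; [lia|simpl; pose proof (pow_R1_Rle 2 p ltac:(lra)); lra]). lra. }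
   assert (Hs : 0 < s <= 1). { unfold s. split. apply Rinv_0_lt_compat; lra. rewrite <- Rinv_1. apply Rinv_le_contravar; lra. }
   assert (Hw : 0 < w). { unfold w. apply Rinv_0_lt_compat, pow_lt; lra. }
   specialize (He4 ltac:(lia)). fold s in He4.
   exists (Kp * (Rpower (4 * khi) s + 1 + Rpower (4 / klo) w)), d0.
   split. apply Rmult_lt_0_compat; auto. pose proof (exp_pos (s * ln (4 * khi))); pose proof (exp_pos (w * ln (4 / klo))); unfold Rpower; lra.
   split; auto.
   intros N h HN Hh HBk HBz HH.
   destruct (Hmain N h HN Hh HBk HBz HH) as [HLam Hb].
   set (H := hnorm L h) in *. pose proof (hnorm_ge1 L h Hh) as H1. fold H in H1.
   assert (HNR : 1 <= INR N) by (apply (le_INR 1); lia).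
   set (NR := INR N) in *.
   set (Lam := khi * H * Rpower NR (fc - 1)) in *.
   assert (HLam0 : 0 < Lam) by (unfold Lam; apply Rmult_lt_0_compat; [apply Rmult_lt_0_compat|apply exp_pos]; lra).
   set (T1 := Rpower (4 * Lam) (- s)). set (T2 := Rpower NR (/ 2 ^ S p)). set (T := Rmin T1 T2).
   assert (HT1 : 1 <= T1).
   { unfold T1. rewrite Rpower_Ropp. rewrite <- Rinv_1 at 1. apply Rinv_le_contravar. apply exp_pos.
     assert (E1 : Rpower 1 s = 1) by (unfold Rpower; rewrite ln_1, Rmult_0_r, exp_0; auto).
     rewrite <- E1. apply Rle_Rpower_l; lra. }
   assert (HT2 : 1 <= T2) by (apply Rpower_ge1; [lra| left; apply Rinv_0_lt_compat, pow_lt; lra]).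
   assert (HT : 1 <= T) by (unfold T; apply Rmin_glb; auto).
   assert (HTT1 : T <= T1) by apply Rmin_l. assert (HTT2 : T <= T2) by apply Rmin_r.
   assert (HTN : T ^ (2 ^ p) <= NR).
   { apply Rle_trans with (T2 ^ (2 ^ p)). apply pow_incr; lra.
     rewrite pow_Rpower by lra. unfold T2. rewrite Rpower_mult. rewrite pow_INR. replace (INR 2) with 2 by (simpl; lra).
     replace (/ 2 ^ S p * 2 ^ p) with (/2) by (simpl; field; apply pow_nonzero; lra).
     rewrite <- (Rpower_1 NR) at 2 by lra. apply Rle_Rpower; lra. }
   assert (HTL : T ^ (2 ^ S p - 2) * Lam <= / 2).
   { apply Rle_trans with (T1 ^ (2 ^ S p - 2) * Lam). apply Rmult_le_compat_r. lra. apply pow_incr; lra.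
     rewrite pow_Rpower by lra. unfold T1. rewrite Rpower_mult.
     rewrite minus_INR. rewrite pow_INR. replace (INR 2) with 2 by (simpl; lra).
     replace (- s * (2 ^ S p - 2)) with (- (1)) by (unfold s; field; lra).
     rewrite Rpower_Ropp, Rpower_1 by lra. replace (/ (4 * Lam) * Lam) with (/4) by (field; lra). lra.
     assert (2 <= 2 ^ S p)%nat by (simpl; pose proof (Nat.pow_nonzero 2 p); lia). lia. }
   specialize (Hb T HT HTN HTL).
   set (lam := klo * Rpower NR (fc - 1)) in *.
   assert (Hlam : 0 < lam <= Lam).
   { unfold lam, Lam. pose proof (exp_pos ((fc - 1) * ln NR)). unfold Rpower in *. split. nra.
     apply Rmult_le_compat_r. lra. nra. }
   set (B := 4 / lam) in *.
   assert (HB1 : 1 <= B). { unfold B. apply Rmult_le_reg_r with lam. lra. field_simplify; lra. }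
   eapply Rle_trans. apply Hb. eapply Rle_trans. apply HU; auto.
   set (X := Rpower NR (1 - eps)).
   assert (HX : 0 < X) by apply exp_pos.
   assert (HNT : NR / T <= NR / T1 + NR / T2).
   { unfold T, Rmin. destruct Rle_dec.
     - assert (0 <= NR / T2) by (unfold Rdiv; apply Rmult_le_pos; [lra| left; apply Rinv_0_lt_compat; lra]). lra.
     - assert (0 <= NR / T1) by (unfold Rdiv; apply Rmult_le_pos; [lra| left; apply Rinv_0_lt_compat; lra]). lra. }
   assert (HNT1 : NR / T1 <= Rpower (4 * khi) s * H * X).
   { unfold T1. unfold Rdiv. rewrite Rpower_Ropp, Rinv_inv.
     unfold Lam. replace (4 * (khi * H * Rpower NR (fc - 1))) with ((4 * khi) * H * Rpower NR (fc - 1)) by ring.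
     rewrite Rpower_mul, Rpower_mul, Rpower_mult; try lra; try apply exp_pos.
     2: apply Rmult_lt_0_compat; lra.
     replace (NR * (Rpower (4 * khi) s * Rpower H s * Rpower NR ((fc - 1) * s))) with
       (Rpower (4 * khi) s * Rpower H s * (NR * Rpower NR ((fc - 1) * s))) by ring.
     rewrite Rpower_xmul by lra.
     apply Rmult_le_compat. apply Rmult_le_pos; left; apply exp_pos. left; apply exp_pos.
     apply Rmult_le_compat_l. left; apply exp_pos. rewrite <- (Rpower_1 H) at 2 by lra. apply Rle_Rpower; lra.
     unfold X. apply Rle_Rpower. lra. unfold s in *. nra. }
   assert (HNT2 : NR / T2 <= H * X).
   { unfold T2, Rdiv. rewrite <- Rpower_Ropp, Rpower_xmul by lra.
     rewrite <- (Rmult_1_l (Rpower NR (1 + - / 2 ^ S p))). apply Rmult_le_compat; try lra. left; apply exp_pos.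
     unfold X. apply Rle_Rpower; lra. }
   assert (HNB : Rpower NR (1 - / 2 ^ p) * Rpower B (/ 2 ^ p) <= Rpower (4 / klo) w * H * X).
   { fold w. unfold B, lam.
     replace (4 / (klo * Rpower NR (fc - 1))) with (4 / klo * Rpower NR (1 - fc)).
     2:{ replace (1 - fc) with (- (fc - 1)) by ring. rewrite Rpower_Ropp. field. split. apply Rgt_not_eq, exp_pos. lra. }
     rewrite Rpower_mul, Rpower_mult. 2: apply Rdiv_lt_0_compat; lra. 2: apply exp_pos.
     replace (Rpower NR (1 - w) * (Rpower (4 / klo) w * Rpower NR ((1 - fc) * w))) with
       (Rpower (4 / klo) w * (Rpower NR (1 - w) * Rpower NR ((1 - fc) * w))) by ring.
     rewrite <- Rpower_plus.
     replace (Rpower (4 / klo) w * H * X) with (Rpower (4 / klo) w * (H * X)) by ring.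
     apply Rmult_le_compat_l. left; apply exp_pos.
     rewrite <- (Rmult_1_l (Rpower NR (1 - w + (1 - fc) * w))). apply Rmult_le_compat; try lra. left; apply exp_pos.
     unfold X. apply Rle_Rpower. lra. unfold w in *. nra. }
   assert (HNT' : NR / T <= (Rpower (4 * khi) s + 1) * H * X) by nra.
   replace (Kp * (Rpower (4 * khi) s + 1 + Rpower (4 / klo) w) * H * X) with
     (Kp * ((Rpower (4 * khi) s + 1) * H * X + Rpower (4 / klo) w * H * X)) by ring.
   apply Rmult_le_compat_l. lra. lra.
Qed.

Lemma combine (L : nat) (P : nat -> R -> R -> Prop) :
  (forall k C d C' d', P k C d -> C <= C' -> d' <= d -> 0 < d' -> P k C' d') ->
  (forall k, (k < L)%nat -> exists C d, 0 < C /\ 0 < d /\ P k C d) ->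
  exists C d, 0 < C /\ 0 < d /\ forall k, (k < L)%nat -> P k C d.
Proof. intros Hmono. induction L; intros Hall.
 - exists 1, 1. split. lra. split. lra. intros; lia.
 - destruct IHL as [C1 [d1 [HC1 [Hd1 H1]]]]. intros k Hk; apply Hall; lia.
   destruct (Hall L ltac:(lia)) as [C2 [d2 [HC2 [Hd2 H2]]]].
   exists (Rmax C1 C2), (Rmin d1 d2). split. eapply Rlt_le_trans. apply HC1. apply Rmax_l.
   split. apply Rmin_glb_lt; auto.
   intros k Hk. destruct (Nat.eq_dec k L) as [->|Hne].
   + apply (Hmono L C2 d2). auto. apply Rmax_r. apply Rmin_r. apply Rmin_glb_lt; auto.
   + apply (Hmono k C1 d1). apply H1; lia. apply Rmax_l. apply Rmin_l. apply Rmin_glb_lt; auto.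
Qed.

Theorem proposition2 :
  forall (c : R), 1 < c -> (forall z : Z, c <> IZR z) ->
  forall (m : nat), (0 < m)%nat ->
  let L := (Z.to_nat (rfloor c) + 1)%nat in
  exists (C0 delta : R), 0 < C0 /\ 0 < delta /\
    forall (N : nat) (h : nat -> Z),
      (0 < N)%nat ->
      (exists l, (l < L)%nat /\ h l <> 0%Z) ->
      hnorm L h <= delta * Rpower (INR N) (1 - fracp c) ->
      Cmod (expsum c m L h N)
        <= C0 * hnorm L h * Rpower (INR N) (1 - dist_int c / Rpower 2 (c + 1)).
Proof.
 intros c Hc Hz m Hm L.
 set (P := fun k0 C0 delta => forall N h, (0 < N)%nat -> (exists l, (l < L)%nat /\ h l <> 0%Z) ->
   Bk L h k0 <> 0 -> (forall k, (k < k0)%nat -> Bk L h k = 0) ->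
   hnorm L h <= delta * Rpower (INR N) (1 - fracp c) ->
   Cmod (expsum c m L h N) <= C0 * hnorm L h * Rpower (INR N) (1 - dist_int c / Rpower 2 (c + 1))).
 destruct (combine L P) as [C [d [HC [Hd HP]]]].
 - intros k C d C' d' HPk HCC Hdd Hd'. unfold P in *. intros N h HN Hh HB HBz HH.
   pose proof (exp_pos ((1 - fracp c) * ln (INR N))) as Hx1.
   pose proof (exp_pos ((1 - dist_int c / Rpower 2 (c + 1)) * ln (INR N))) as Hx2.
   unfold Rpower in *.
   eapply Rle_trans. apply HPk; auto. eapply Rle_trans. apply HH. apply Rmult_le_compat_r; lra.
   pose proof (hnorm_ge1 L h Hh). apply Rmult_le_compat_r. lra. apply Rmult_le_compat_r; lra.
 - intros k Hk. apply (main_k0 c m k Hc Hz Hm Hk).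
 - exists C, d. split; auto. split; auto. intros N h HN Hh HH.
   destruct (k0_exists L h Hh) as [k0 [Hk0 [HBk HBz]]].
   apply (HP k0 Hk0 N h); auto.
Qed.
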